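(* For $k\ge2$, let $\mathrm{SCHF}[2^k]$ denote the recursive spherical codes by Hopf foliations in dimension $2^k$ (see context), with cardinalities $M(2^k,d)$. Then the asymptotic center density $$\overline{\Delta}_c(\mathrm{SCHF}[2^k])=\lim_{d\to0}\frac{M(2^k,d)}{\mathbb{S}_{2^k}}\left(\frac d2\right)^{2^k-1}$$ equals $2^{\,1-3\cdot2^{k-2}}\,3^{-2^{k-3}}$.
   Context: $\mathbb{S}_m=\frac{m\pi^{m/2}}{\Gamma(1+m/2)}$ is the surface area of the unit sphere $S^{m-1}\subset\mathbb{R}^m$. Base case $\mathrm{SCHF}[4]$: for $d\in(0,2]$, with $\Delta\eta=2\arcsin(d/2)$, $t=\lfloor\pi/(4\arcsin(d/2))\rfloor$, $\eta_i=\pi/4+i\Delta\eta$ ($0\le i\le\lfloor t/2\rfloor$), $m(d,\eta)=\lfloor\pi/\arcsin(d/(2\cos\eta))\rfloor$ if $d\le2\cos\eta$ and $1$ otherwise, $n(d,\eta)=\max(2\lfloor\min\{n_1,n_2\}/2\rfloor,1)$ with $n_1=\lfloor\pi/\arcsin[((d^2/4)\csc^2\eta-\cot^2\eta\sin^2(\pi/2m))^{1/2}]\rfloor$ ($m=m(d,\eta)$) and $n_2=\lfloor2\pi/\arcsin(d/(2\sin\eta))\rfloor$ if $d\le2\sin\eta$, $1$ otherwise, the code consists of the points $(e^{\mathbf{i}(2\pi j/m_i+\pi k/m_i)}\cos\eta_i,e^{\mathbf{i}2\pi k/n_i}\sin\eta_i)\in\mathbb{C}^2\cong\mathbb{R}^4$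 ($0\le j<m_i=m(d,\eta_i)$, $0\le k<n_i=n(d,\eta_i)$) together with their images under swapping the two complex coordinates for $i\ge1$; so $M(4,d)=m_0n_0+2\sum_{i=1}^{\lfloor t/2\rfloor}m_in_i$. For $d>2$ (including $d=+\infty$) the code in any dimension is a single point. Recursive step: for $k\ge3$ and $d\in(0,2]$, with the same $\Delta\eta,t$ and $\eta_i=\pi/4+i\Delta\eta$ for $|i|\le\lfloor t/2\rfloor$, $\mathrm{SCHF}[2^k]$ with minimum distance $d$ is the union over $i$ of $\{(\cos\eta_i\mathbf{x};\sin\eta_i\mathbf{y})\}$ with $\mathbf{x}$ in $\mathrm{SCHF}[2^{k-1}]$ of minimum distance $d/\cos\eta_i$ and $\mathbf{y}$ in $\mathrm{SCHF}[2^{k-1}]$ of minimum distance $d/\sin\eta_i$ (with $d/0:=+\infty$); so $M(2^k,d)=\sum_{|i|\le\lfloor t/2\rfloor}M(2^{k-1},d/\cos\eta_i)M(2^{k-1},d/\sin\eta_i)$. *)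

(* Defs.v *)
From Stdlib Require Import Reals Lra List Factorial.
From Coquelicot Require Import Coquelicot.
Open Scope R_scope.

(* floor of a real, as a natural number (negative values are sent to 0;
   only nonnegative arguments occur in the construction for small d). *)
Definition nfloor (x : R) : nat := Z.to_nat (Int_part x).

Definition nsum (l : list nat) : nat := fold_right Nat.add 0%nat l.

Definition m_fn (d eta : R) : nat :=
  if Rle_dec d (2 * cos eta) then nfloor (PI / asin (d / (2 * cos eta))) else 1%nat.

Definition n_fn (d eta : R) : nat :=
  let m := m_fn d eta in
  let n1 := nfloor (PI / asin (sqrt ((d ^ 2 / 4) * / (sin eta) ^ 2
               - (cos eta / sin eta) ^ 2 * (sin (PI / (2 * INR m))) ^ 2))) in
  let n2 := if Rle_dec d (2 * sin eta)
            then nfloor (2 * PI / asin (d / (2 * sin eta))) else 1%nat in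
  Nat.max (2 * (Nat.min n1 n2 / 2)) 1.

Definition delta_eta (d : R) : R := 2 * asin (d / 2).
Definition t_par (d : R) : nat := nfloor (PI / (4 * asin (d / 2))).

Definition M4 (d : R) : nat :=
  let eta := fun i : nat => PI / 4 + INR i * delta_eta d in
  (m_fn d (eta 0%nat) * n_fn d (eta 0%nat)
   + 2 * nsum (map (fun i => m_fn d (eta i) * n_fn d (eta i))
                   (seq 1 (t_par d / 2))))%nat.

Definition divR (d x : R) : Rbar :=
  if Req_EM_T x 0 then p_infty else Finite (d / x).

(* Mr j d = M(2^(j+2), d); minimum distance d in (0,2] or larger / +oo.
   For d > 2 (or d = +oo) the code is a single point. *)
Fixpoint Mr (j : nat) (d : Rbar) : nat :=
  match d with
  | Finite x =>
    if Rlt_dec 0 x then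
      if Rle_dec x 2 then
        match j with
        | O => M4 x
        | S j' =>
          let T := (t_par x / 2)%nat in
          let eta := fun l : nat => PI / 4 + (INR l - INR T) * delta_eta x in
          nsum (map (fun l => Mr j' (divR x (cos (eta l))) * Mr j' (divR x (sin (eta l))))
                    (seq 0 (2 * T + 1)))%nat
        end
      else 1%nat
    else 1%nat
  | _ => 1%nat
  end.

Definition M_SCHF (k : nat) (d : R) : nat := Mr (k - 2) (Finite d).

(* Surface area S_m = m pi^(m/2) / Gamma(1 + m/2) of S^{m-1}, for EVEN m,
   where Gamma(1 + m/2) = (m/2)!.  Only used with m = 2^k, k >= 2. *)
Definition sphere_area_even (m : nat) : R :=
  INR m * PI ^ (m / 2) / INR (fact (m / 2)).

(* Main.v *)
Require Import Defs.
From Stdlib Require Import Reals Lra Lia List Factorial ZArith.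
From Coquelicot Require Import Coquelicot.
Open Scope R_scope.

Lemma PI_gt3 : 3 < PI. Proof. pose proof PI2_3_2; lra. Qed.
Lemma PI_le4 : PI <= 4. Proof. exact PI_4. Qed.

Lemma nfloor_bounds (y : R) : 0 <= y -> y - 1 < INR (Defs.nfloor y) <= y.
Proof.
  intro Hy. unfold Defs.nfloor. destruct (base_Int_part y) as [H1 H2].
  assert (Hz : (0 <= Int_part y)%Z).
  { apply le_IZR. simpl. destruct (Rle_or_lt 0 (IZR (Int_part y))) as [h|h]; [lra|].
    exfalso. assert (IZR (Int_part y) <= -1).
    { assert (Int_part y < 0)%Z by (apply lt_IZR; simpl; lra).
      apply IZR_le; lia. } lra. }
  rewrite INR_IZR_INZ, Z2Nat.id by exact Hz. lra.
Qed.

Lemma nfloor_le (y : R) : INR (Defs.nfloor y) <= Rmax 0 y.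
Proof.
  destruct (Rle_or_lt 0 y) as [h|h].
  - pose proof (nfloor_bounds y h). unfold Rmax; destruct Rle_dec; lra.
  - unfold Defs.nfloor. destruct (base_Int_part y) as [H1 H2].
    assert (Int_part y < 0)%Z by (apply lt_IZR; simpl; lra).
    replace (Z.to_nat (Int_part y)) with 0%nat by lia. simpl.
    unfold Rmax; destruct Rle_dec; lra.
Qed.

Lemma INR_fact_S n : INR (fact (S n)) = INR (S n) * INR (fact n).
Proof. rewrite fact_simpl, mult_INR. reflexivity. Qed.

Lemma sin_bounds_small (a : R) : 0 <= a -> a <= 2 -> a - a^3/6 <= sin a <= a.
Proof.
  intros H0 H2. assert (HP := PI_gt3).
  destruct (SIN a H0 ltac:(lra)) as [Hl Hu].
  assert (El : sin_lb a = a - a^3/6 + a^5/120 - a^7/5040).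
  { unfold sin_lb, sin_approx. cbn [sum_f_R0]. unfold sin_term. cbn [Nat.mul Nat.add].
    rewrite !INR_fact_S. cbn [fact INR]. field. }
  assert (Eu : sin_ub a = a - a^3/6 + a^5/120 - a^7/5040 + a^9/362880).
  { unfold sin_ub, sin_approx. cbn [sum_f_R0]. unfold sin_term. cbn [Nat.mul Nat.add].
    rewrite !INR_fact_S. cbn [fact INR]. field. }
  rewrite El in Hl; rewrite Eu in Hu. split.
  - assert (a^5/120 - a^7/5040 >= 0).
    { assert (a^7 = a^5 * (a*a)) by ring. assert (0 <= a^5) by (apply pow_le; lra).
      assert (a*a <= 4) by nra. nra. }
    lra.
  - assert (a^3/6 - a^5/120 >= 0).
    { assert (a^5 = a^3 * (a*a)) by ring. assert (0 <= a^3) by (apply pow_le; lra).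
      assert (a*a <= 4) by nra. nra. }
    assert (a^7/5040 - a^9/362880 >= 0).
    { assert (a^9 = a^7 * (a*a)) by ring. assert (0 <= a^7) by (apply pow_le; lra).
      assert (a*a <= 4) by nra. nra. }
    lra.
Qed.

Lemma sin_le_id (a : R) : 0 <= a -> sin a <= a.
Proof.
  intro H. destruct (Rle_or_lt a 2).
  - apply sin_bounds_small; lra.
  - pose proof (SIN_bound a). lra.
Qed.

Lemma asin_nonneg (x : R) : 0 <= x -> x <= 1 -> 0 <= asin x.
Proof.
  intros H0 H1. destruct (asin_bound x) as [Hl Hu].
  destruct (Rle_or_lt 0 (asin x)) as [h|h]; auto.
  assert (sin (asin x) < 0) by (apply sin_lt_0_var; pose proof PI_gt3; lra).
  rewrite sin_asin in H by lra. lra.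
Qed.

Lemma asin_bounds (x : R) : 0 <= x -> x <= 1 -> x <= asin x <= x + 5 * x^3.
Proof.
  intros H0 H1. pose proof (asin_nonneg x H0 H1) as Hy.
  destruct (asin_bound x) as [Hl Hu]. pose proof PI_le4.
  set (y := asin x) in *.
  assert (Hs : sin y = x) by (apply sin_asin; lra).
  destruct (sin_bounds_small y Hy ltac:(lra)) as [A B].
  split. lra.
  assert (y*y <= 4) by nra.
  assert (y^3/6 <= 2/3 * y) by (simpl; nra).
  assert (y <= 3*x) by lra.
  assert (y^3 <= 27 * x^3).
  { assert (y^3 <= (3*x)^3) by (apply pow_incr; lra). lra. }
  lra.
Qed.

Lemma mvt_bound (F f : R -> R) (M : R) :
  (forall x, derivable_pt_lim F x (f x)) -> (forall x, Rabs (f x) <= M) ->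
  forall a b, Rabs (F b - F a) <= M * Rabs (b - a).
Proof.
  intros HD HM a b.
  destruct (MVT_gen F a b f) as [c [_ Hc]].
  - intros x _. apply is_derive_Reals. apply HD.
  - intros x _. apply derivable_continuous_pt. exists (f x). apply HD.
  - rewrite Hc, Rabs_mult. apply Rmult_le_compat_r. apply Rabs_pos. apply HM.
Qed.

Lemma mvt_step (F f : R -> R) (L : R) :
  (forall x, derivable_pt_lim F x (f x)) -> (forall x y, Rabs (f x - f y) <= L * Rabs (x - y)) ->
  forall a h, 0 <= h -> Rabs (F (a + h) - F a - f a * h) <= L * h^2.
Proof.
  intros HD HL a h Hh.
  destruct (MVT_gen F a (a+h) f) as [c [Hc1 Hc]].
  - intros x _. apply is_derive_Reals. apply HD.
  - intros x _. apply derivable_continuous_pt. exists (f x). apply HD.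
  - rewrite Hc. replace (f c * (a + h - a) - f a * h) with ((f c - f a) * h) by ring.
    rewrite Rabs_mult, (Rabs_right h) by lra.
    unfold Rmin, Rmax in Hc1; destruct Rle_dec in Hc1; [|lra].
    assert (Rabs (c - a) <= h) by (rewrite Rabs_right; lra).
    pose proof (HL c a). 
    assert (0 <= L).
    { pose proof (Rabs_pos (f c - f c)). pose proof (HL c (c+1)).
      assert (E1 : Rabs (c - (c+1)) = 1).
      { rewrite Rabs_left by lra. ring. }
      rewrite E1 in H2. pose proof (Rabs_pos (f c - f (c+1))). lra. }
    simpl. apply Rle_trans with (L * Rabs (c - a) * h).
    apply Rmult_le_compat_r; lra.
    rewrite Rmult_1_r, <- Rmult_assoc. apply Rmult_le_compat_r; [lra|].
    apply Rmult_le_compat_l; lra.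
Qed.


Lemma isd_plus (f g : R -> R) x a b :
  is_derive f x a -> is_derive g x b -> is_derive (fun x => f x + g x) x (a + b).
Proof. intros H1 H2. exact (is_derive_plus f g x a b H1 H2). Qed.

Fixpoint G (q : nat) (u : R) : R :=
  match q with
  | O => - cos u
  | S q' => - (sin u ^ (2*q'+2) * cos u) / INR (2*q'+3) + INR (2*q'+2) / INR (2*q'+3) * G q' u
  end.

Lemma G_der q u : is_derive (G q) u (sin u ^ (2*q+1)).
Proof.
  revert u; induction q as [|q IH]; intro u.
  - simpl G. apply (is_derive_ext (fun u => - cos u)). intro; reflexivity.
    auto_derive; auto. simpl. ring.
  - apply (is_derive_ext (fun u => - (sin u ^ (2*q+2) * cos u) / INR (2*q+3) + INR (2*q+2) / INR (2*q+3) * G q u)).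
    { intro; reflexivity. }
    assert (H3 : INR (2*q+3) <> 0) by (apply not_0_INR; lia).
    replace (sin u ^ (2 * S q + 1)) with
      ((- (INR (2*q+2) * sin u ^ (2*q+1) * cos u * cos u - sin u ^ (2*q+2) * sin u)) / INR (2*q+3)
       + INR (2*q+2) / INR (2*q+3) * sin u ^ (2*q+1)).
    2:{ assert (Hc : cos u ^ 2 = 1 - sin u ^ 2) by (pose proof (sin2_cos2 u); unfold Rsqr in *; simpl; lra).
        replace (2 * S q + 1)%nat with (2*q+1+2)%nat by lia.
        replace (2*q+2)%nat with (2*q+1+1)%nat by lia.
        set (P := sin u ^ (2*q+1)).
        assert (E1 : sin u ^ (2*q+1+2) = P * sin u ^ 2) by (unfold P; rewrite pow_add; ring).
        assert (E2 : sin u ^ (2*q+1+1) = P * sin u) by (unfold P; rewrite pow_add; ring).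
        rewrite E1, E2. clearbody P.
        rewrite !plus_INR, !mult_INR in *. simpl. simpl in H3.
        apply Rminus_diag_uniq. field_simplify; [|lra]. rewrite Hc. field. lra. }
    apply isd_plus.
    + auto_derive; auto. replace (q + (q + 0))%nat with (2*q)%nat by lia.
      replace (Init.Nat.pred (2*q+2)) with (2*q+1)%nat by lia.
      unfold Rdiv. ring.
    + apply is_derive_scal. apply IH.
Qed.

Definition V (q : nat) : R := G q PI - G q 0.

Lemma V_S q : V (S q) = INR (2*q+2) / INR (2*q+3) * V q.
Proof.
  unfold V. simpl G. rewrite sin_PI, cos_PI, sin_0, cos_0.
  replace (q + (q + 0))%nat with (2*q)%nat by lia. rewrite !pow_i by lia. unfold Rdiv. ring.
Qed.

Lemma V_closed q : V q = 2 * 4^q * (INR (fact q))^2 / INR (fact (2*q+1)).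
Proof.
  induction q as [|q IH].
  - unfold V. simpl. rewrite cos_PI, cos_0. field.
  - rewrite V_S, IH.
    replace (2 * S q + 1)%nat with (S (S (2*q+1))) by lia.
    rewrite !INR_fact_S.
    assert (INR (fact q) <> 0) by (apply not_0_INR; apply fact_neq_0).
    assert (INR (fact (2*q+1)) <> 0) by (apply not_0_INR; apply fact_neq_0).
    rewrite !S_INR, !plus_INR, !mult_INR. simpl.
    field. repeat split; try assumption; pose proof (pos_INR q); lra.
Qed.

Definition fq (q : nat) (x : R) : R := (sin x * cos x) ^ (2*q+1).
Definition Fq (q : nat) (x : R) : R := G q (2*x) / 2^(2*q+2).
Definition Iq (q : nat) : R := V q / 2^(2*q+2).

Lemma Fq_der q x : derivable_pt_lim (Fq q) x (fq q x).
Proof.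
  apply is_derive_Reals. unfold Fq, fq.
  apply (is_derive_ext (fun x => / 2^(2*q+2) * G q (2*x))).
  { intro t. unfold Rdiv. apply Rmult_comm. }
  assert (E : (sin x * cos x) ^ (2 * q + 1) = / 2^(2*q+2) * (2 * sin (2*x) ^ (2*q+1))).
  { rewrite sin_2a. replace (2*q+2)%nat with (S (2*q+1)) by lia.
    set (n := (2*q+1)%nat). change (2 ^ S n) with (2 * 2 ^ n).
    rewrite !Rpow_mult_distr. field. apply pow_nonzero. lra. }
  rewrite E.
  apply is_derive_scal.
  apply (is_derive_comp (G q) (fun x => 2 * x) x (sin (2*x) ^ (2*q+1)) 2).
  - apply G_der.
  - auto_derive; auto. ring.
Qed.

Lemma Iq_eq q : Iq q = Fq q (PI/2) - Fq q 0.
Proof.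
  unfold Iq, Fq, V. replace (2 * (PI/2)) with PI by field. replace (2*0) with 0 by ring.
  field. apply pow_nonzero; lra.
Qed.

Lemma sc_bound x : Rabs (sin x * cos x) <= 1.
Proof.
  rewrite Rabs_mult. pose proof (Rabs_pos (sin x)). pose proof (Rabs_pos (cos x)).
  assert (Rabs (sin x) <= 1) by (apply Rabs_le; apply SIN_bound).
  assert (Rabs (cos x) <= 1) by (apply Rabs_le; apply COS_bound). nra.
Qed.

Lemma pow_abs_le1 (u : R) n : Rabs u <= 1 -> Rabs (u ^ n) <= 1.
Proof.
  intro H. rewrite <- RPow_abs. induction n; simpl. lra.
  pose proof (pow_le (Rabs u) n (Rabs_pos u)). nra.
Qed.

Lemma fq_bound q x : Rabs (fq q x) <= 1.
Proof. unfold fq. apply pow_abs_le1, sc_bound. Qed.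

Lemma pow_lip (u v : R) n : Rabs u <= 1 -> Rabs v <= 1 ->
  Rabs (u ^ n - v ^ n) <= INR n * Rabs (u - v).
Proof.
  intros Hu Hv. induction n as [|n IH].
  - simpl. replace (1-1) with 0 by ring. rewrite Rabs_R0. lra.
  - replace (u ^ S n - v ^ S n) with (u * (u^n - v^n) + v^n * (u - v)) by (simpl; ring).
    rewrite S_INR. eapply Rle_trans. apply Rabs_triang.
    rewrite !Rabs_mult. pose proof (pow_abs_le1 v n Hv). pose proof (Rabs_pos u).
    pose proof (Rabs_pos (u^n - v^n)). pose proof (Rabs_pos (u - v)).
    pose proof (Rabs_pos (v^n)). nra.
Qed.

Lemma sc_lip x y : Rabs (sin x * cos x - sin y * cos y) <= Rabs (x - y).
Proof.
  rewrite <- (Rmult_1_l (Rabs (x - y))).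
  apply (mvt_bound (fun x => sin x * cos x) (fun x => cos x * cos x - sin x * sin x) 1).
  - intro t. apply is_derive_Reals. auto_derive; auto. ring.
  - intro t. pose proof (sin2_cos2 t). unfold Rsqr in H. apply Rabs_le.
    pose proof (Rle_0_sqr (sin t)); pose proof (Rle_0_sqr (cos t)); unfold Rsqr in *. lra.
Qed.

Lemma fq_lip q x y : Rabs (fq q x - fq q y) <= INR (2*q+1) * Rabs (x - y).
Proof.
  unfold fq. eapply Rle_trans. apply pow_lip; apply sc_bound.
  apply Rmult_le_compat_l. apply pos_INR. apply sc_lip.
Qed.

Lemma Fq_lip q a b : Rabs (Fq q b - Fq q a) <= Rabs (b - a).
Proof.
  rewrite <- (Rmult_1_l (Rabs (b - a))). apply (mvt_bound _ (fq q)).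
  apply Fq_der. apply fq_bound.
Qed.

Definition sumR (f : nat -> R) (l : list nat) : R := fold_right (fun i acc => f i + acc) 0 l.

Lemma INR_nsum_map (g : nat -> nat) l : INR (nsum (map g l)) = sumR (fun i => INR (g i)) l.
Proof. induction l; simpl. reflexivity. rewrite plus_INR, IHl. reflexivity. Qed.

Lemma sumR_ext f g l : (forall i, In i l -> f i = g i) -> sumR f l = sumR g l.
Proof.
  induction l; simpl; intros H. reflexivity. rewrite H by auto. rewrite IHl; auto.
Qed.

Lemma sumR_err f g l C : (forall i, In i l -> Rabs (f i - g i) <= C) ->
  Rabs (sumR f l - sumR g l) <= INR (length l) * C.
Proof.
  induction l; intros H.
  - simpl. replace (0-0) with 0 by ring. rewrite Rabs_R0. lra.
  - assert (HL: INR (length (a :: l)) = INR (length l) + 1) by (simpl length; apply S_INR).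
    rewrite HL. simpl sumR. simpl In in H.
    replace (f a + sumR f l - (g a + sumR g l)) with ((f a - g a) + (sumR f l - sumR g l)) by ring.
    eapply Rle_trans. apply Rabs_triang.
    pose proof (H a (or_introl eq_refl)). assert (Rabs (sumR f l - sumR g l) <= INR (length l) * C) by auto.
    lra.
Qed.

Lemma sumR_scal a f l : sumR (fun i => a * f i) l = a * sumR f l.
Proof. induction l; simpl. ring. rewrite IHl. ring. Qed.

Lemma sumR_minus f g l : sumR (fun i => f i - g i) l = sumR f l - sumR g l.
Proof. induction l; simpl. ring. rewrite IHl. ring. Qed.

Lemma sumR_nonneg f l : (forall i, In i l -> 0 <= f i) -> 0 <= sumR f l.
Proof.
  induction l; simpl; intros H. lra. pose proof (H a (or_introl eq_refl)).
  assert (0 <= sumR f l) by auto. lra.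
Qed.

Lemma sumR_cons f a l : sumR f (a :: l) = f a + sumR f l.
Proof. reflexivity. Qed.

Lemma telescope (F : R -> R) a h s N :
  sumR (fun l => F (a + INR (S l) * h) - F (a + INR l * h)) (seq s N)
  = F (a + INR (s + N) * h) - F (a + INR s * h).
Proof.
  revert s. induction N as [|N IH]; intro s; cbn [seq].
  - rewrite Nat.add_0_r. unfold sumR; simpl fold_right. ring.
  - rewrite sumR_cons. rewrite IH. replace (S s + N)%nat with (s + S N)%nat by lia. ring.
Qed.

Lemma riemann (F f : R -> R) (L : R) :
  (forall x, derivable_pt_lim F x (f x)) -> (forall x y, Rabs (f x - f y) <= L * Rabs (x - y)) ->
  forall a h s N, 0 <= h ->
  Rabs (sumR (fun l => f (a + INR l * h) * h) (seq s N) - (F (a + INR (s + N) * h) - F (a + INR s * h)))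
  <= INR N * (L * h^2).
Proof.
  intros HD HL a h s N Hh. rewrite <- telescope.
  replace (INR N) with (INR (length (seq s N))) by (rewrite length_seq; reflexivity).
  apply sumR_err. intros i _. cbv beta.
  replace (a + INR (S i) * h) with ((a + INR i * h) + h) by (rewrite S_INR; ring).
  rewrite <- Rabs_Ropp. replace (- (f (a + INR i * h) * h - (F (a + INR i * h + h) - F (a + INR i * h))))
    with (F (a + INR i * h + h) - F (a + INR i * h) - f (a + INR i * h) * h) by ring.
  apply (mvt_step F f L HD HL _ h Hh).
Qed.


Lemma h_bounds d : 0 < d <= 2 ->
  d <= delta_eta d <= d + 5/4 * d^3 /\ delta_eta d <= PI /\ delta_eta d <= 6 * d.
Proof.
  intros Hd. unfold delta_eta.
  destruct (asin_bounds (d/2) ltac:(lra) ltac:(lra)) as [A B].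
  pose proof (asin_bound (d/2)).
  assert (d^3 <= 4 * d) by (simpl; nra).
  replace ((d/2)^3) with (d^3/8) in B by (simpl; field).
  repeat split; lra.
Qed.

Lemma T_bounds d : 0 < d <= 2 ->
  let h := delta_eta d in let T := (t_par d / 2)%nat in
  INR T * h <= PI/4 /\ PI/4 - h < INR T * h.
Proof.
  intros Hd h T. destruct (h_bounds d Hd) as [[H1 H2] [H3 H4]].
  assert (Hh : 0 < h) by (unfold h; lra).
  assert (E : PI / (4 * asin (d/2)) = PI / (2 * h)) by (unfold h, delta_eta; field; unfold delta_eta in H1; lra).
  assert (Hp : 0 <= PI / (2*h)).
  { apply Rlt_le, Rdiv_lt_0_compat. pose proof PI_gt3; lra. lra. }
  pose proof (nfloor_bounds _ Hp) as [F1 F2].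
  assert (ET : t_par d = Defs.nfloor (PI/(2*h))) by (unfold t_par; rewrite E; reflexivity).
  rewrite <- ET in F1, F2. set (t := t_par d) in *. clear ET.
  assert (Ht : (2 * T <= t <= 2*T+1)%nat).
  { unfold T. pose proof (Nat.div_mod t 2 ltac:(lia)). pose proof (Nat.mod_upper_bound t 2 ltac:(lia)). lia. }
  assert (R1 : 2 * INR T <= INR t <= 2 * INR T + 1).
  { destruct Ht as [Ha Hb]. apply le_INR in Ha, Hb. rewrite mult_INR, plus_INR, mult_INR in *. simpl in *. lra. }
  assert (Q : PI / (2*h) * h = PI/2) by (field; lra).
  split.
  - assert (2 * INR T * h <= PI/(2*h) * h) by (apply Rmult_le_compat_r; lra). lra.
  - assert ((PI/(2*h) - 1) * h < (2 * INR T + 1) * h) by (apply Rmult_lt_compat_r; lra).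
    assert ((PI/(2*h) - 1) * h = PI/2 - h) by (field; lra). lra.
Qed.

Lemma abs3 x y z : Rabs (x + y - z) <= Rabs x + Rabs y + Rabs z.
Proof.
  unfold Rminus. eapply Rle_trans. apply Rabs_triang. rewrite Rabs_Ropp.
  pose proof (Rabs_triang x y). lra.
Qed.

Lemma window d h Sm I C M : 0 < d <= 2 -> d <= h <= d + 5/4 * d^3 ->
  Rabs (h * Sm - I) <= C * h -> Rabs I <= M -> 0 <= C ->
  Rabs (d * Sm - I) <= (C + 5/2 * M) * d.
Proof.
  intros Hd Hh H1 H2 HC.
  assert (Hh0 : 0 < h) by lra.
  replace (d * Sm - I) with (d/h * (h * Sm - I) + (d/h - 1) * I) by (field; lra).
  eapply Rle_trans. apply Rabs_triang. rewrite !Rabs_mult.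
  assert (E1 : Rabs (d/h) = d/h) by (apply Rabs_right; apply Rle_ge, Rlt_le, Rdiv_lt_0_compat; lra).
  set (r := d/h) in *.
  assert (Hr : r * h = d) by (unfold r; field; lra).
  assert (Hr1 : 0 < r <= 1) by (split; [unfold r; apply Rdiv_lt_0_compat; lra | nra]).
  assert (E2 : Rabs (r - 1) = 1 - r) by (rewrite Rabs_left1; lra).
  rewrite E1, E2.
  assert (A1 : r * Rabs (h * Sm - I) <= r * (C * h)) by (apply Rmult_le_compat_l; lra).
  assert (A2 : (1 - r) * Rabs I <= (1 - r) * M) by (apply Rmult_le_compat_l; lra).
  assert (A3 : (1 - r) * h <= 5/4 * d^3) by nra.
  assert (A4 : (1 - r) <= 5/4 * d^2).
  { assert ((1 - r) * h <= 5/4 * d^2 * h).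
    { assert (5/4*d^3 <= 5/4 * d^2 * h) by (simpl; nra). lra. }
    apply (Rmult_le_reg_r h); lra. }
  assert (0 <= M) by (pose proof (Rabs_pos I); lra).
  assert (A5 : (1 - r) * M <= 5/2 * d * M).
  { apply Rmult_le_compat_r. lra. simpl in A4. nra. }
  nra.
Qed.

Lemma riemann_full q : exists K, forall d, 0 < d <= 2 ->
  let h := delta_eta d in let T := (t_par d / 2)%nat in
  Rabs (d * sumR (fun l => fq q (PI/4 + (INR l - INR T) * h)) (seq 0 (2*T+1)) - Iq q) <= K * d.
Proof.
  set (L := INR (2*q+1)).
  assert (HL : 0 <= L) by apply pos_INR.
  exists ((L * (3/2 * PI) + 2) + 5/2 * (PI/2)).
  intros d Hd h T.
  destruct (h_bounds d Hd) as [[H1 H2] [H3 H4]]. fold h in H1, H2, H3, H4.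
  destruct (T_bounds d Hd) as [T1 T2]. fold h T in T1, T2.
  assert (HP := PI_gt3).
  set (a := PI/4 - INR T * h).
  set (Sm := sumR (fun l => fq q (PI/4 + (INR l - INR T) * h)) (seq 0 (2*T+1))).
  assert (ES : h * Sm = sumR (fun l => fq q (a + INR l * h) * h) (seq 0 (2*T+1))).
  { unfold Sm. rewrite <- sumR_scal. apply sumR_ext. intros i _. unfold a.
    replace (PI / 4 - INR T * h + INR i * h) with (PI / 4 + (INR i - INR T) * h) by ring. ring. }
  pose proof (riemann (Fq q) (fq q) L (Fq_der q) (fq_lip q) a h 0 (2*T+1) ltac:(lra)) as R.
  rewrite <- ES in R. rewrite Nat.add_0_l in R.
  replace (a + INR 0 * h) with a in R by (simpl; ring).
  assert (EN : INR (2*T+1) = 2 * INR T + 1) by (rewrite plus_INR, mult_INR; simpl; ring).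
  rewrite EN in R.
  assert (Iq_b : Rabs (Iq q) <= PI/2).
  { rewrite Iq_eq. eapply Rle_trans. apply Fq_lip. rewrite Rabs_right; lra. }
  apply (window d h Sm (Iq q) (L * (3/2 * PI) + 2) (PI/2)); try lra.
  rewrite Iq_eq.
  replace (h * Sm - (Fq q (PI / 2) - Fq q 0)) with
    ((h * Sm - (Fq q (a + (2 * INR T + 1) * h) - Fq q a)) + (Fq q (a + (2 * INR T + 1) * h) - Fq q (PI/2)) - (Fq q a - Fq q 0)) by ring.
  eapply Rle_trans. apply abs3.
  pose proof (Fq_lip q (PI/2) (a + (2 * INR T + 1) * h)) as Y.
  pose proof (Fq_lip q 0 a) as Z.
  assert (Ya : Rabs (a + (2 * INR T + 1) * h - PI / 2) <= h).
  { unfold a. apply Rabs_le. split; nra. }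
  assert (Za : Rabs (a - 0) <= h).
  { unfold a. apply Rabs_le. split; nra. }
  assert (Xa : (2 * INR T + 1) * (L * h ^ 2) <= L * (3/2 * PI) * h).
  { replace ((2 * INR T + 1) * (L * h ^ 2)) with (L * h * (2 * INR T * h + h)) by (simpl; ring).
    replace (L * (3/2 * PI) * h) with (L * h * (3/2 * PI)) by ring.
    apply Rmult_le_compat_l. apply Rmult_le_pos; lra. lra. }
  lra. nra.
Qed.

Lemma Iq0 : Iq 0 = 1/2.
Proof. unfold Iq, V. simpl. rewrite cos_PI, cos_0. field. Qed.

Lemma riemann_half : exists K, forall d, 0 < d <= 2 ->
  let h := delta_eta d in let T := (t_par d / 2)%nat in
  Rabs (d * (fq 0 (PI/4) + 2 * sumR (fun i => fq 0 (PI/4 + INR i * h)) (seq 1 T)) - 1/2) <= K * d.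
Proof.
  exists (1 + 2 * ((PI/4 + 2) + 5/2 * (1/4))).
  intros d Hd h T.
  destruct (h_bounds d Hd) as [[H1 H2] [H3 H4]]. fold h in H1, H2, H3, H4.
  destruct (T_bounds d Hd) as [T1 T2]. fold h T in T1, T2.
  assert (HP := PI_gt3).
  set (Sm := sumR (fun i => fq 0 (PI/4 + INR i * h)) (seq 1 T)).
  assert (ES : h * Sm = sumR (fun l => fq 0 (PI/4 + INR l * h) * h) (seq 1 T)).
  { unfold Sm. rewrite <- sumR_scal. apply sumR_ext. intros i _. ring. }
  pose proof (riemann (Fq 0) (fq 0) (INR (2*0+1)) (Fq_der 0) (fq_lip 0) (PI/4) h 1 T ltac:(lra)) as R.
  rewrite <- ES in R. simpl (INR (2*0+1)) in R.
  assert (E1 : INR (1 + T) = INR T + 1) by (rewrite plus_INR; simpl; ring).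
  rewrite E1 in R. replace (INR 1) with 1 in R by reflexivity.
  assert (F1 : Fq 0 (PI/2) = 1/4) by (unfold Fq; simpl; replace (2 * (PI/2)) with PI by field; rewrite cos_PI; field).
  assert (F2 : Fq 0 (PI/4) = 0) by (unfold Fq; simpl; replace (2 * (PI/4)) with (PI/2) by field; rewrite cos_PI2; field).
  assert (HS : Rabs (h * Sm - 1/4) <= (PI/4 + 2) * h).
  { replace (h * Sm - 1/4) with
      ((h * Sm - (Fq 0 (PI/4 + (INR T + 1) * h) - Fq 0 (PI/4 + 1 * h))) + (Fq 0 (PI/4 + (INR T + 1) * h) - Fq 0 (PI/2)) - (Fq 0 (PI/4 + 1*h) - Fq 0 (PI/4))) by (rewrite F1, F2; ring).
    eapply Rle_trans. apply abs3.
    pose proof (Fq_lip 0 (PI/2) (PI/4 + (INR T + 1) * h)) as Y.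
    pose proof (Fq_lip 0 (PI/4) (PI/4 + 1 * h)) as Z.
    assert (Ya : Rabs (PI/4 + (INR T + 1) * h - PI / 2) <= h) by (apply Rabs_le; split; nra).
    assert (Za : Rabs (PI/4 + 1 * h - PI/4) <= h) by (apply Rabs_le; split; nra).
    assert (Xa : INR T * (1 * h ^ 2) <= PI/4 * h).
    { replace (INR T * (1 * h ^ 2)) with ((INR T * h) * h) by (simpl; ring).
      apply Rmult_le_compat_r; lra. }
    lra. }
  assert (HW := window d h Sm (1/4) (PI/4 + 2) (1/4) Hd ltac:(lra) HS ltac:(rewrite Rabs_right; lra) ltac:(lra)).
  assert (Hf : Rabs (fq 0 (PI/4)) <= 1) by apply fq_bound.
  replace (d * (fq 0 (PI / 4) + 2 * Sm) - 1 / 2) with (d * fq 0 (PI/4) + 2 * (d * Sm - 1/4)) by field.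
  eapply Rle_trans. apply Rabs_triang. rewrite !Rabs_mult, (Rabs_right d) by lra.
  rewrite (Rabs_right 2) by lra. nra.
Qed.


Lemma pi_over_asin_le x : 0 < x <= 1 -> PI / asin x <= PI / x.
Proof.
  intros Hx. destruct (asin_bounds x ltac:(lra) ltac:(lra)) as [A B].
  pose proof PI_gt3. apply Rmult_le_compat_l. lra. apply Rinv_le_contravar; lra.
Qed.

Lemma pi_over_asin_ge x : 0 < x <= 1 -> PI / x * (1 - 5 * x^2) <= PI / asin x.
Proof.
  intros Hx. destruct (asin_bounds x ltac:(lra) ltac:(lra)) as [A B].
  pose proof PI_gt3. 
  assert (Ha : 0 < asin x) by lra.
  unfold Rdiv. rewrite Rmult_assoc. apply Rmult_le_compat_l. lra.
  apply (Rmult_le_reg_r (asin x)). lra. rewrite Rinv_l by lra.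
  assert (/ x * (1 - 5 * x^2) * asin x <= / x * (1 - 5 * x^2) * (x + 5 * x^3) \/ 1 - 5 * x^2 < 0).
  { destruct (Rle_or_lt 0 (1 - 5*x^2)). left. apply Rmult_le_compat_l.
    apply Rmult_le_pos. apply Rlt_le, Rinv_0_lt_compat; lra. lra. lra. right; lra. }
  destruct H0.
  - eapply Rle_trans. exact H0. replace (/ x * (1 - 5 * x ^ 2) * (x + 5 * x ^ 3)) with (1 - 25 * x^4) by (field; lra).
    assert (0 <= x^4) by (apply pow_le; lra). lra.
  - assert (0 < / x) by (apply Rinv_0_lt_compat; lra).
    assert (/ x * (1 - 5 * x ^ 2) * asin x <= 0).
    { rewrite Rmult_assoc. assert ((1 - 5 * x ^ 2) * asin x <= 0) by nra. nra. }
    lra.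
Qed.

Lemma m_bound_gen d e : 0 < d -> 0 <= cos e -> INR (m_fn d e) <= 2 * PI * cos e / d + 1.
Proof.
  intros Hd Hc. pose proof PI_gt3. unfold m_fn. destruct Rle_dec as [h|h].
  - assert (Hc' : 0 < cos e) by lra.
    assert (Hx : 0 < d / (2 * cos e) <= 1).
    { split. apply Rdiv_lt_0_compat; lra. apply (Rmult_le_reg_r (2 * cos e)). lra.
      unfold Rdiv. rewrite Rmult_assoc, Rinv_l by lra. lra. }
    assert (Hp : 0 <= PI / asin (d / (2 * cos e))).
    { destruct (asin_bounds (d / (2 * cos e))) as [A B]; try lra.
      apply Rlt_le, Rdiv_lt_0_compat; lra. }
    destruct (nfloor_bounds _ Hp) as [F1 F2].
    pose proof (pi_over_asin_le _ Hx).
    replace (PI / (d / (2 * cos e))) with (2 * PI * cos e / d) in H0 by (field; lra). lra.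
  - simpl. assert (0 <= 2 * PI * cos e / d) by (apply Rmult_le_pos; [nra | apply Rlt_le, Rinv_0_lt_compat; lra]).
    lra.
Qed.

Lemma INR_max1 a : INR (Nat.max a 1) <= INR a + 1.
Proof.
  destruct (Nat.max_spec a 1) as [[H1 H2]|[H1 H2]]; rewrite H2.
  - simpl. pose proof (pos_INR a). lra.
  - lra.
Qed.

Lemma n_bound_gen d e : 0 < d <= 2 -> 0 < sin e -> INR (n_fn d e) <= 4 * PI / d + 1.
Proof.
  intros [Hd Hd2] Hs. pose proof PI_gt3. unfold n_fn. cbv zeta.
  set (n1 := Defs.nfloor _). 
  set (n2 := if Rle_dec d (2 * sin e) then _ else _).
  assert (Hn2 : INR n2 <= 4 * PI / d).
  { unfold n2. destruct Rle_dec as [h|h].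
    - assert (Hx : 0 < d / (2 * sin e) <= 1).
      { split. apply Rdiv_lt_0_compat; lra. apply (Rmult_le_reg_r (2 * sin e)). lra.
        unfold Rdiv. rewrite Rmult_assoc, Rinv_l by lra. lra. }
      destruct (asin_bounds (d / (2 * sin e))) as [A B]; try lra.
      assert (Hp : 0 <= 2 * PI / asin (d / (2 * sin e))) by (apply Rlt_le, Rdiv_lt_0_compat; lra).
      destruct (nfloor_bounds _ Hp) as [F1 F2].
      assert (H1 : 2 * PI / asin (d / (2 * sin e)) <= 2 * PI / (d / (2 * sin e))).
      { apply Rmult_le_compat_l. lra. apply Rinv_le_contravar; lra. }
      replace (2 * PI / (d / (2 * sin e))) with (4 * PI * sin e / d) in H1 by (field; lra).
      assert (4 * PI * sin e / d <= 4 * PI / d).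
      { unfold Rdiv. apply Rmult_le_compat_r. apply Rlt_le, Rinv_0_lt_compat; lra.
        pose proof (SIN_bound e). nra. }
      lra.
    - simpl.
      assert (4 * PI / d >= 1).
      { apply Rle_ge. apply (Rmult_le_reg_r d). lra. unfold Rdiv. rewrite Rmult_assoc, Rinv_l by lra.
        lra. }
      lra. }
  eapply Rle_trans. apply INR_max1.
  assert (INR (2 * (Nat.min n1 n2 / 2)) <= INR n2).
  { apply le_INR. pose proof (Nat.mul_div_le (Nat.min n1 n2) 2). lia. }
  lra.
Qed.

Lemma caseA_m d e : 0 < cos e -> 0 < d -> d / (2 * cos e) <= 1/200 ->
  let x := d / (2 * cos e) in let m := INR (m_fn d e) in
  0 <= PI - x * m <= 2 * x /\ x / 2 <= PI / (2 * m) <= x / 2 + x^2 /\ 2 / x <= m.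
Proof.
  intros Hc Hd Hx x m. pose proof PI_gt3. pose proof PI_le4.
  assert (Hx0 : 0 < x) by (unfold x; apply Rdiv_lt_0_compat; lra).
  assert (Hx1 : x <= 1/200) by (unfold x; lra). assert (Ex : x = d / (2 * cos e)) by reflexivity. clearbody x.
  assert (Hm : m = INR (Defs.nfloor (PI / asin x))).
  { unfold m, m_fn. rewrite Ex. destruct Rle_dec as [h|h]. reflexivity. exfalso. apply h.
    apply (Rmult_le_reg_r (/ (2 * cos e))). apply Rinv_0_lt_compat; lra.
    rewrite Rinv_r by lra. unfold Rdiv in Hx. lra. }
  assert (Hp : 0 <= PI / asin x).
  { destruct (asin_bounds x) as [A B]; try lra. apply Rlt_le, Rdiv_lt_0_compat; lra. }
  destruct (nfloor_bounds _ Hp) as [F1 F2]. rewrite <- Hm in F1, F2.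
  pose proof (pi_over_asin_le x ltac:(lra)) as U.
  pose proof (pi_over_asin_ge x ltac:(lra)) as L.
  assert (M1 : x * m <= PI).
  { assert (m <= PI / x) by lra. apply (Rmult_le_compat_l x) in H1; [|lra].
    replace (x * (PI / x)) with PI in H1 by (field; lra). lra. }
  assert (M2 : PI - 2 * x <= x * m).
  { assert (PI / x * (1 - 5 * x ^ 2) - 1 < m) by lra.
    apply (Rmult_lt_compat_l x) in H1; [|lra].
    replace (x * (PI / x * (1 - 5 * x ^ 2) - 1)) with (PI - 5 * PI * x^2 - x) in H1 by (field; lra).
    assert (5 * PI * x^2 <= x) by (simpl; nra). lra. }
  assert (Mpos : 2 / x <= m).
  { apply (Rmult_le_reg_l x). lra. replace (x * (2/x)) with 2 by (field; lra). lra. }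
  assert (Hm0 : 0 < m).
  { assert (0 < 2 / x) by (apply Rdiv_lt_0_compat; lra). lra. }
  split; [lra|]. split; [|exact Mpos].
  assert (E : PI / (2 * m) = x / 2 + (PI - x * m) / (2 * m)) by (field; lra).
  rewrite E. split.
  - assert (0 <= (PI - x * m) / (2 * m)) by (apply Rmult_le_pos; [lra | apply Rlt_le, Rinv_0_lt_compat; lra]). lra.
  - assert ((PI - x * m) / (2 * m) <= x^2).
    { apply (Rmult_le_reg_r (2 * m)). lra. replace ((PI - x * m) / (2 * m) * (2 * m)) with (PI - x * m) by (field; lra).
      assert (x^2 * (2 * m) >= 2 * x * (x * m) ) by (simpl; nra). 
      assert (2 * x * (x * m) >= 2 * x * 2) by (assert (x * m >= 2) by lra; nra).
      lra. }
    lra.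
Qed.

Lemma n_core c s x sg r3 :
  0 < c <= 1 -> 0 < s <= 1 -> 1/2 <= s^2 -> 0 < x <= 1/200 ->
  Rabs (sg - x/2) <= x^2 -> r3 * r3 = 3 -> 0 < r3 ->
  let d := 2 * c * x in
  let w := sqrt ((d ^ 2 / 4) * / s ^ 2 - (c / s) ^ 2 * sg ^ 2) in
  0 < w <= 2 * d /\ Rabs (PI * d / w - 4 * PI * s / r3) <= 27 * x.
Proof.
  intros Hc Hs Hs2 Hx He Hr3 Hr3p d w.
  pose proof PI_gt3. pose proof PI_le4.
  assert (Hs7 : 7/10 <= s) by nra.
  assert (R1 : 173/100 <= r3 <= 174/100) by nra.
  set (a := c * x).
  assert (Ha : 0 < a) by (unfold a; nra).
  assert (Ed : d = 2 * a) by (unfold d, a; ring).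
  set (e := sg - x/2).
  assert (Hee : Rabs e <= x^2) by exact He.
  apply Rabs_le_between in Hee. simpl in Hee.
  set (Q := (d ^ 2 / 4) * / s ^ 2 - (c / s) ^ 2 * sg ^ 2).
  assert (EQ : Q * s^2 = a^2 - c^2 * sg^2).
  { unfold Q. rewrite Ed. field. lra. }
  assert (Esg : sg = x/2 + e) by (unfold e; ring).
  assert (E2 : c^2 * sg^2 = a^2/4 + (c^2 * x * e + c^2 * e^2)).
  { rewrite Esg. unfold a. simpl. field. }
  assert (B1 : Rabs (c^2 * x * e + c^2 * e^2) <= 2 * a^2 * x).
  { assert (e*e <= x^2 * x^2) by (simpl in *; nra).
    assert (Rabs (c^2 * x * e) <= c^2 * x * x^2).
    { rewrite Rabs_mult. rewrite (Rabs_right (c^2*x)) by (apply Rle_ge; simpl; nra).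
      apply Rmult_le_compat_l. simpl; nra. apply Rabs_le; simpl; nra. }
    assert (0 <= c^2 * e^2 <= c^2 * x^4).
    { simpl. split. nra. assert (0 <= c*c) by nra. replace (x*(x*(x*(x*1)))) with (x^2*x^2) by (simpl; ring).
      simpl. nra. }
    eapply Rle_trans. apply Rabs_triang. rewrite (Rabs_right (c^2 * e^2)) by lra.
    assert (c^2 * x^4 <= c^2 * x * x^2) by (simpl; nra).
    replace (2 * a^2 * x) with (2 * (c^2 * x * x^2)) by (unfold a; simpl; ring). lra. }
  apply Rabs_le_between in B1.
  set (w0 := r3 * a / (2 * s)).
  assert (Ew0 : w0^2 * s^2 = 3 * a^2 / 4) by (unfold w0; simpl; field_simplify; [rewrite <- Hr3|lra]; field; lra).
  assert (HQ1 : Q * s^2 - w0^2 * s^2 <= 2 * a^2 * x) by lra.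
  assert (HQ2 : - (2 * a^2 * x) <= Q * s^2 - w0^2 * s^2) by lra.
  assert (Hw0 : 86/100 * a <= w0 <= 125/100 * a).
  { unfold w0. split.
    - apply (Rmult_le_reg_r (2*s)). lra. replace (r3 * a / (2 * s) * (2 * s)) with (r3 * a) by (field; lra).
      assert (0 <= a * (r3 - 172/100 * s)). apply Rmult_le_pos; lra. lra.
    - apply (Rmult_le_reg_r (2*s)). lra. replace (r3 * a / (2 * s) * (2 * s)) with (r3 * a) by (field; lra).
      assert (0 <= a * (250/100 * s - r3)) by (apply Rmult_le_pos; lra). lra. }
  assert (HQd : Rabs (Q - w0^2) <= 4 * a^2 * x).
  { apply Rabs_le. assert (Q * s^2 - w0^2 * s^2 = (Q - w0^2) * s^2) by ring.
    assert (0 < a^2 * x) by (apply Rmult_lt_0_compat; [apply pow_lt|]; lra).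
    split.
    - destruct (Rle_or_lt (- (4 * a ^ 2 * x)) (Q - w0 ^ 2)); auto. simpl in *. nra.
    - destruct (Rle_or_lt (Q - w0 ^ 2) (4 * a ^ 2 * x)); auto. simpl in *. nra. }
  apply Rabs_le_between in HQd.
  assert (Hax : a^2 * x <= a^2 / 200).
  { assert (0 <= a^2) by (apply pow_le; lra). 
    replace (a^2/200) with (a^2 * (1/200)) by field. apply Rmult_le_compat_l; lra. }
  assert (HQlo : 71/100 * a^2 <= Q).
  { assert (H3 : w0^2 >= (86/100*a)^2) by (apply Rle_ge, pow_incr; split; lra). 
    replace ((86/100*a)^2) with (7396/10000 * a^2) in H3 by (simpl; field). lra. }
  assert (HQhi : Q <= 16/10 * a^2).
  { assert (H3 : w0^2 <= (125/100*a)^2) by (apply pow_incr; split; lra).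
    replace ((125/100*a)^2) with (15625/10000 * a^2) in H3 by (simpl; field). lra. }
  assert (Ew : w * w = Q) by (unfold w; fold Q; apply sqrt_sqrt; simpl in *; nra).
  assert (Hw0p : 0 <= w) by (unfold w; apply sqrt_pos).
  assert (Hwlo : 84/100 * a <= w) by (simpl in *; nra).
  assert (Hwhi : w <= 13/10 * a) by (simpl in *; nra).
  split. split; lra.
  assert (Et : 4 * PI * s / r3 = PI * d / w0) by (unfold w0; rewrite Ed; field; lra).
  rewrite Et.
  assert (Ediff : PI * d / w - PI * d / w0 = PI * d * (w0 * w0 - w * w) / (w * w0 * (w + w0))) by (field; lra).
  rewrite Ediff. rewrite Ew.
  assert (Hden : 120/100 * a^3 <= w * w0 * (w + w0)).
  { assert (w * w0 >= 84/100 * a * (86/100 * a)) by nra.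
    assert (w + w0 >= 170/100 * a) by lra.
    assert (w * w0 * (w + w0) >= 84/100 * a * (86/100 * a) * (170/100 * a)) by nra.
    simpl. nra. }
  assert (Hdp : 0 < w * w0 * (w + w0)) by (assert (0 < a^3) by (apply pow_lt; lra); lra).
  unfold Rdiv. rewrite Rabs_mult, Rabs_Rinv by lra. rewrite (Rabs_right (w * w0 * (w + w0))) by lra.
  apply (Rmult_le_reg_r (w * w0 * (w + w0))). lra.
  rewrite Rmult_assoc, Rinv_l, Rmult_1_r by lra.
  rewrite Rabs_mult. rewrite (Rabs_right (PI * d)) by (rewrite Ed; nra).
  assert (Rabs (w0 * w0 - Q) <= 4 * a^2 * x) by (apply Rabs_le; simpl in *; lra).
  assert (PI * d * Rabs (w0 * w0 - Q) <= PI * d * (4 * a^2 * x)) by (apply Rmult_le_compat_l; [rewrite Ed; nra | lra]).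
  assert (PI * d * (4 * a^2 * x) <= 27 * x * (120/100 * a^3)).
  { rewrite Ed. replace (PI * (2 * a) * (4 * a ^ 2 * x)) with (8 * PI * (a^3 * x)) by (simpl; ring).
    replace (27 * x * (120 / 100 * a ^ 3)) with (324/10 * (a^3 * x)) by (simpl; field).
    apply Rmult_le_compat_r. apply Rmult_le_pos; [apply pow_le|]; lra. lra. }
  assert (27 * x * (120/100 * a^3) <= 27 * x * (w * w0 * (w + w0))) by (apply Rmult_le_compat_l; lra).
  lra.
Qed.

Lemma r3_facts : sqrt 3 * sqrt 3 = 3 /\ 173/100 <= sqrt 3 <= 174/100.
Proof.
  assert (E : sqrt 3 * sqrt 3 = 3) by (apply sqrt_sqrt; lra).
  pose proof (sqrt_pos 3). split; [exact E|]. nra.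
Qed.

Lemma n_caseA d e : 0 < cos e <= 1 -> 0 < sin e <= 1 -> 1/2 <= sin e ^ 2 ->
  0 < d <= 1/10000 -> d / (2 * cos e) <= 1/200 ->
  Rabs (INR (n_fn d e) * d - 4 * PI * sin e / sqrt 3) <= 27 * (d / (2 * cos e)) + 3 * d.
Proof.
  intros Hc Hs Hs2 Hd Hx.
  pose proof PI_gt3. pose proof PI_le4.
  destruct r3_facts as [Er3 Br3].
  pose proof (caseA_m d e ltac:(lra) ltac:(lra) Hx) as HM. cbv zeta in HM.
  set (x := d / (2 * cos e)) in *.
  assert (Hx0 : 0 < x) by (unfold x; apply Rdiv_lt_0_compat; lra).
  assert (Edx : 2 * cos e * x = d) by (unfold x; field; lra).
  clearbody x.
  set (m := m_fn d e) in *.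
  destruct HM as [_ [[Z1 Z2] _]].
  set (z := PI / (2 * INR m)) in *.
  assert (Hsg : Rabs (sin z - x/2) <= x^2).
  { assert (Hz : 0 <= z <= 2) by (simpl in Z2; nra).
    destruct (sin_bounds_small z ltac:(lra) ltac:(lra)) as [S1 S2].
    assert (z^3 <= x^2).
    { assert (z <= x) by (simpl in Z2; nra). 
      assert (z^3 <= x^3) by (apply pow_incr; lra). simpl in *. nra. }
    apply Rabs_le. split; lra. }
  pose proof (n_core (cos e) (sin e) x (sin z) (sqrt 3) Hc Hs Hs2 ltac:(lra) Hsg Er3 ltac:(lra)) as NC.
  cbv zeta in NC. rewrite Edx in NC.
  destruct NC as [[W1 W2] W3].
  set (w := sqrt (d ^ 2 / 4 * / sin e ^ 2 - (cos e / sin e) ^ 2 * sin z ^ 2)) in *.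
  set (tau := 4 * PI * sin e / sqrt 3) in *.
  assert (Htau : 228/100 * PI * sin e <= tau <= 232/100 * PI * sin e).
  { unfold tau. split.
    - apply (Rmult_le_reg_r (sqrt 3)). lra. replace (4 * PI * sin e / sqrt 3 * sqrt 3) with (4 * PI * sin e) by (field; lra).
      assert (0 <= PI * sin e) by nra. nra.
    - apply (Rmult_le_reg_r (sqrt 3)). lra. replace (4 * PI * sin e / sqrt 3 * sqrt 3) with (4 * PI * sin e) by (field; lra).
      assert (0 <= PI * sin e) by nra. nra. }
  assert (Hs7 : 7/10 <= sin e) by nra.
  assert (Hw1 : w <= 1) by lra.
  assert (Hp1 : 0 <= PI / asin w).
  { destruct (asin_bounds w) as [A B]; try lra. apply Rlt_le, Rdiv_lt_0_compat; lra. }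
  set (n1 := Defs.nfloor (PI / asin w)).
  destruct (nfloor_bounds _ Hp1) as [F1 F2]. fold n1 in F1, F2.
  pose proof (pi_over_asin_le w ltac:(lra)) as U1.
  pose proof (pi_over_asin_ge w ltac:(lra)) as L1.
  assert (N1hi : INR n1 * d <= tau + 27 * x).
  { assert (INR n1 * d <= PI / w * d) by (apply Rmult_le_compat_r; lra).
    replace (PI / w * d) with (PI * d / w) in H1 by (field; lra).
    apply Rabs_le_between in W3. lra. }
  assert (N1lo : tau - 27 * x - 2 * d <= INR n1 * d).
  { assert ((PI / w * (1 - 5 * w^2) - 1) * d <= INR n1 * d) by (apply Rmult_le_compat_r; lra).
    replace ((PI / w * (1 - 5 * w^2) - 1) * d) with (PI * d / w - 5 * PI * d * w - d) in H1 by (field; lra).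
    apply Rabs_le_between in W3.
    assert (5 * PI * d * w <= d).
    { assert (5 * PI * w <= 1) by nra. 
      replace (5 * PI * d * w) with (d * (5 * PI * w)) by ring. 
      rewrite <- (Rmult_1_r d) at 2. apply Rmult_le_compat_l; lra. }
    lra. }
  assert (Hy : 0 < d / (2 * sin e) <= 1).
  { split. apply Rdiv_lt_0_compat; lra. apply (Rmult_le_reg_r (2 * sin e)). lra.
    unfold Rdiv. rewrite Rmult_assoc, Rinv_l by lra. lra. }
  set (y := d / (2 * sin e)) in *.
  assert (Ey : y * (2 * sin e) = d) by (unfold y; field; lra).
  assert (Hp2 : 0 <= 2 * PI / asin y).
  { destruct (asin_bounds y) as [A B]; try lra. apply Rlt_le, Rdiv_lt_0_compat; lra. }
  set (n2 := Defs.nfloor (2 * PI / asin y)).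
  destruct (nfloor_bounds _ Hp2) as [G1 G2]. fold n2 in G1, G2.
  pose proof (pi_over_asin_ge y Hy) as L2.
  assert (N2lo : 4 * PI * sin e - 2 * d <= INR n2 * d).
  { assert (2 * PI / asin y = 2 * (PI / asin y)) by (unfold Rdiv; ring).
    assert ((2 * (PI / y * (1 - 5 * y^2)) - 1) * d <= INR n2 * d) by (apply Rmult_le_compat_r; lra).
    replace ((2 * (PI / y * (1 - 5 * y^2)) - 1) * d) with (4 * PI * sin e - 20 * PI * sin e * y^2 - d) in H2
      by (rewrite <- Ey; field; lra).
    assert (20 * PI * sin e * y^2 <= d).
    { assert (y <= d) by (apply (Rmult_le_reg_r (2 * sin e)); nra).
      assert (y^2 <= d * d) by (simpl; nra).
      assert (20 * PI * sin e <= 80) by nra.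
      assert (0 <= y^2) by (apply pow_le; lra).
      assert (20 * PI * sin e * y^2 <= 80 * (d * d)) by nra. nra. }
    lra. }
  assert (Hlt : (n1 < n2)%nat).
  { apply INR_lt. apply (Rmult_lt_reg_r d). lra.
    assert (27 * x <= 27/200) by lra. nra. }
  assert (Hn1 : (2 <= n1)%nat).
  { assert (2 < INR n1).
    { assert (2 * d < INR n1 * d) by nra. nra. }
    assert (INR 1 < INR n1) by (simpl; lra). apply INR_lt in H2. lia. }
  assert (En : n_fn d e = Nat.max (2 * (Nat.min n1 n2 / 2)) 1).
  { unfold n_fn. cbv zeta. fold m. fold z. fold w. fold n1.
    destruct Rle_dec as [h|h]. fold y. fold n2. reflexivity.
    exfalso. apply h. destruct Hy as [_ Hy]. unfold y in Hy.
    apply (Rmult_le_reg_r (/ (2 * sin e))). apply Rinv_0_lt_compat; lra.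
    rewrite Rinv_r by lra. exact Hy. }
  rewrite En. rewrite Nat.min_l by lia.
  assert (Hdiv : (n1 - 1 <= 2 * (n1 / 2) <= n1)%nat).
  { pose proof (Nat.div_mod n1 2 ltac:(lia)). pose proof (Nat.mod_upper_bound n1 2 ltac:(lia)). lia. }
  rewrite Nat.max_l by lia.
  assert (HR : INR n1 - 1 <= INR (2 * (n1 / 2)) <= INR n1).
  { split.
    - assert (HH : INR (n1 - 1) <= INR (2 * (n1 / 2))) by (apply le_INR; lia).
      rewrite minus_INR in HH by lia. change (INR 1) with 1 in HH. lra.
    - apply le_INR; lia. }
  apply Rabs_le. 
  assert (INR (2 * (n1 / 2)) * d <= INR n1 * d) by (apply Rmult_le_compat_r; lra).
  assert ((INR n1 - 1) * d <= INR (2 * (n1 / 2)) * d) by (apply Rmult_le_compat_r; lra).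
  split; nra.
Qed.

Lemma sqrt_small d : 0 < d <= 1/10000 -> sqrt d * sqrt d = d /\ 0 < sqrt d <= 1/100 /\ d <= sqrt d.
Proof.
  intros Hd. assert (E : sqrt d * sqrt d = d) by (apply sqrt_sqrt; lra).
  assert (P : 0 < sqrt d) by (apply sqrt_lt_R0; lra).
  split; [exact E|]. split; [split; [exact P| nra]|]. nra.
Qed.

Lemma eta_facts e : PI/4 <= e <= PI/2 ->
  0 <= cos e <= 1 /\ 0 < sin e <= 1 /\ 1/2 <= sin e ^ 2 /\ sin e ^ 2 + cos e ^ 2 = 1.
Proof.
  intros He. pose proof PI_gt3.
  assert (Hc0 : 0 <= cos e) by (apply cos_ge_0; lra).
  assert (Hs0 : 0 < sin e) by (apply sin_gt_0; lra).
  assert (Hsc : sin e ^ 2 + cos e ^ 2 = 1) by (pose proof (sin2_cos2 e); unfold Rsqr in H0; simpl; lra).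
  assert (Hc4 : cos e <= cos (PI/4)).
  { destruct (Req_dec e (PI/4)) as [E|E]. rewrite E; lra.
    apply Rlt_le, cos_decreasing_1; lra. }
  rewrite cos_PI4 in Hc4.
  assert (Hc2 : cos e ^ 2 <= 1/2).
  { assert (cos e ^ 2 <= (1 / sqrt 2)^2) by (apply pow_incr; lra).
    assert (E2 : sqrt 2 * sqrt 2 = 2) by (apply sqrt_sqrt; lra).
    assert (P2 : 0 < sqrt 2) by (apply sqrt_lt_R0; lra).
    replace ((1 / sqrt 2)^2) with (1/(sqrt 2 * sqrt 2)) in H0 by (simpl; field; lra).
    rewrite E2 in H0. lra. }
  pose proof (SIN_bound e). pose proof (COS_bound e).
  repeat split; lra.
Qed.

Definition kappa2 : R := 8 * PI^2 / sqrt 3.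

Lemma base_term : exists K, forall d e, 0 < d <= 1/10000 -> PI/4 <= e <= PI/2 ->
  Rabs (INR (m_fn d e) * INR (n_fn d e) * d^2 - kappa2 * (sin e * cos e)) <= K * sqrt d.
Proof.
  exists 300. intros d e Hd He.
  pose proof PI_gt3. pose proof PI_le4.
  destruct (eta_facts e He) as [[Hc0 Hc1] [[Hs0 Hs1] [Hs2 Hsc]]].
  destruct (sqrt_small d Hd) as [Esd [[Sd0 Sd1] Sd2]].
  destruct r3_facts as [Er3 Br3].
  assert (Hk : 0 <= kappa2 <= 75).
  { unfold kappa2. split. apply Rmult_le_pos. simpl; nra. apply Rlt_le, Rinv_0_lt_compat; lra.
    apply (Rmult_le_reg_r (sqrt 3)). lra. replace (8 * PI ^ 2 / sqrt 3 * sqrt 3) with (8 * PI^2) by (field; lra).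
    simpl. nra. }
  assert (Hsc0 : 0 <= sin e * cos e) by nra.
  pose proof (pos_INR (m_fn d e)) as Pm. pose proof (pos_INR (n_fn d e)) as Pn.
  destruct (Rle_or_lt (sqrt d) (cos e)) as [CA|CB].
  -
    assert (Hc : 0 < cos e) by lra.
    set (x := d / (2 * cos e)).
    assert (Ex : 2 * cos e * x = d) by (unfold x; field; lra).
    assert (Hx0 : 0 < x) by (unfold x; apply Rdiv_lt_0_compat; lra).
    assert (Hx : x <= 1/200).
    { assert (2 * cos e * x <= 2 * cos e * (1/200)).
      { rewrite Ex. assert (d <= cos e * sqrt d) by nra. nra. }
      apply (Rmult_le_reg_l (2 * cos e)); lra. }
    pose proof (caseA_m d e Hc ltac:(lra) Hx) as HM. cbv zeta in HM. fold x in HM.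
    destruct HM as [[M1 M2] _].
    pose proof (n_caseA d e ltac:(lra) ltac:(lra) Hs2 Hd Hx) as HN. fold x in HN.
    set (m := INR (m_fn d e)) in *. set (n := INR (n_fn d e)) in *.
    set (tau := 4 * PI * sin e / sqrt 3) in *.
    assert (Htau : 0 <= tau <= 10).
    { unfold tau. split. apply Rmult_le_pos. nra. apply Rlt_le, Rinv_0_lt_compat; lra.
      apply (Rmult_le_reg_r (sqrt 3)). lra. replace (4 * PI * sin e / sqrt 3 * sqrt 3) with (4 * PI * sin e) by (field; lra).
      nra. }
    assert (Emd : m * d - 2 * PI * cos e = - (2 * cos e) * (PI - x * m)) by (rewrite <- Ex; ring).
    assert (HMd : Rabs (m * d - 2 * PI * cos e) <= 2 * d).
    { rewrite Emd, Rabs_mult, Rabs_Ropp, Rabs_right, Rabs_right by lra.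
      rewrite <- Ex. nra. }
    assert (Ek : kappa2 * (sin e * cos e) = 2 * PI * cos e * tau) by (unfold kappa2, tau; simpl; field; lra).
    rewrite Ek.
    replace (m * n * d^2 - 2 * PI * cos e * tau) with
      ((m * d - 2 * PI * cos e) * (n * d) + 2 * PI * cos e * (n * d - tau)) by (simpl; ring).
    eapply Rle_trans. apply Rabs_triang.
    rewrite (Rabs_mult (m * d - 2 * PI * cos e) (n * d)), (Rabs_mult (2 * PI * cos e) (n * d - tau)).
    rewrite (Rabs_right (n * d)) by nra.
    rewrite (Rabs_right (2 * PI * cos e)) by nra.
    apply Rabs_le_between in HN.
    assert (A1 : Rabs (m * d - 2 * PI * cos e) * (n * d) <= 2 * d * 12).
    { apply Rmult_le_compat. apply Rabs_pos. nra. exact HMd. lra. }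
    assert (A2 : 2 * PI * cos e * Rabs (n * d - tau) <= 2 * PI * cos e * (27 * x + 3 * d)).
    { apply Rmult_le_compat_l. nra. apply Rabs_le; lra. }
    assert (A3 : 2 * PI * cos e * (27 * x + 3 * d) <= 27 * PI * d + 6 * PI * d).
    { replace (2 * PI * cos e * (27 * x + 3 * d)) with (27 * PI * (2 * cos e * x) + 6 * PI * cos e * d) by ring.
      rewrite Ex. assert (PI * cos e * d <= PI * d) by (assert (0 <= PI * d) by nra; nra). lra. }
    nra.
  -
    pose proof (m_bound_gen d e ltac:(lra) Hc0) as MB.
    pose proof (n_bound_gen d e ltac:(lra) Hs0) as NB.
    set (m := INR (m_fn d e)) in *. set (n := INR (n_fn d e)) in *.
    assert (MB' : m * d <= 2 * PI * cos e + d).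
    { assert (m * d <= (2 * PI * cos e / d + 1) * d) by (apply Rmult_le_compat_r; lra).
      replace ((2 * PI * cos e / d + 1) * d) with (2 * PI * cos e + d) in H1 by (field; lra). lra. }
    assert (NB' : n * d <= 4 * PI + d).
    { assert (n * d <= (4 * PI / d + 1) * d) by (apply Rmult_le_compat_r; lra).
      replace ((4 * PI / d + 1) * d) with (4 * PI + d) in H1 by (field; lra). lra. }
    assert (P1 : 0 <= m * n * d^2 <= 153 * sqrt d).
    { replace (m * n * d^2) with ((m * d) * (n * d)) by (simpl; ring). split. apply Rmult_le_pos; apply Rmult_le_pos; lra.
      assert (PI * cos e <= 4 * sqrt d) by (apply Rmult_le_compat; lra).
      assert (m * d <= 9 * sqrt d) by lra.
      assert (n * d <= 17) by lra.
      assert (0 <= m * d) by nra. assert (0 <= n * d) by nra. nra. }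
    assert (P2 : 0 <= kappa2 * (sin e * cos e) <= 75 * sqrt d).
    { split. nra. assert (sin e * cos e <= sqrt d) by nra. nra. }
    apply Rabs_le. split; lra.
Qed.


Definition gterm (d : R) (i : nat) : R :=
  INR (m_fn d (PI/4 + INR i * delta_eta d)) * INR (n_fn d (PI/4 + INR i * delta_eta d)).

Lemma M4_expand d : INR (M4 d) = gterm d 0 + 2 * sumR (gterm d) (seq 1 (t_par d / 2)).
Proof.
  unfold M4. cbv zeta. rewrite plus_INR, !mult_INR, INR_nsum_map.
  unfold gterm. f_equal. f_equal. apply sumR_ext. intros i _. rewrite mult_INR. reflexivity.
Qed.

Lemma eta_range d i : 0 < d <= 2 -> (i <= t_par d / 2)%nat ->
  PI/4 <= PI/4 + INR i * delta_eta d <= PI/2.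
Proof.
  intros Hd Hi. destruct (T_bounds d Hd) as [T1 T2]. cbv zeta in T1.
  destruct (h_bounds d Hd) as [[H1 H2] _].
  apply le_INR in Hi. pose proof (pos_INR i).
  split. nra. assert (INR i * delta_eta d <= INR (t_par d / 2) * delta_eta d) by (apply Rmult_le_compat_r; lra). lra.
Qed.

Lemma gterm_bound d i : 0 < d <= 2 -> (i <= t_par d / 2)%nat -> 0 <= gterm d i * d^2 <= 180.
Proof.
  intros Hd Hi. pose proof (eta_range d i Hd Hi) as He.
  destruct (eta_facts _ He) as [[Hc0 Hc1] [[Hs0 Hs1] _]].
  pose proof (m_bound_gen d _ ltac:(lra) Hc0) as MB.
  pose proof (n_bound_gen d _ Hd Hs0) as NB.
  unfold gterm. set (m := INR (m_fn _ _)) in *. set (n := INR (n_fn _ _)) in *.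
  pose proof PI_le4. pose proof PI_gt3.
  assert (Pm : 0 <= m) by apply pos_INR. assert (Pn : 0 <= n) by apply pos_INR.
  assert (MB' : m * d <= 10).
  { assert (m * d <= (2 * PI * cos (PI / 4 + INR i * delta_eta d) / d + 1) * d) by (apply Rmult_le_compat_r; lra).
    replace ((2 * PI * cos (PI / 4 + INR i * delta_eta d) / d + 1) * d) with (2 * PI * cos (PI / 4 + INR i * delta_eta d) + d) in H1 by (field; lra).
    assert (PI * cos (PI / 4 + INR i * delta_eta d) <= 4 * 1) by (apply Rmult_le_compat; lra). lra. }
  assert (NB' : n * d <= 18).
  { assert (n * d <= (4 * PI / d + 1) * d) by (apply Rmult_le_compat_r; lra).
    replace ((4 * PI / d + 1) * d) with (4 * PI + d) in H1 by (field; lra). lra. }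
  replace (m * n * d^2) with ((m * d) * (n * d)) by (simpl; ring).
  split. apply Rmult_le_pos; apply Rmult_le_pos; lra.
  assert (0 <= m * d) by (apply Rmult_le_pos; lra). assert (0 <= n * d) by (apply Rmult_le_pos; lra).
  nra.
Qed.

Lemma M4_crude d : 0 < d <= 2 -> 0 <= INR (M4 d) * d^3 <= 720.
Proof.
  intros Hd. rewrite M4_expand.
  destruct (T_bounds d Hd) as [T1 T2]. cbv zeta in T1.
  destruct (h_bounds d Hd) as [[H1 H2] _].
  set (T := (t_par d / 2)%nat) in *.
  pose proof (gterm_bound d 0 Hd ltac:(lia)) as G0.
  assert (GS : Rabs (sumR (fun i => gterm d i * d^2) (seq 1 T) - sumR (fun _ => 0) (seq 1 T)) <= INR (length (seq 1 T)) * 180).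
  { apply sumR_err. intros i Hi. apply in_seq in Hi.
    pose proof (gterm_bound d i Hd ltac:(unfold T in *; lia)). rewrite Rminus_0_r, Rabs_right; lra. }
  rewrite length_seq in GS.
  assert (Z : sumR (fun _ : nat => 0) (seq 1 T) = 0).
  { clear. induction (seq 1 T); simpl; auto. unfold sumR in *; simpl. rewrite IHl. ring. }
  rewrite Z, Rminus_0_r in GS.
  assert (GP : 0 <= sumR (fun i => gterm d i * d^2) (seq 1 T)).
  { apply sumR_nonneg. intros i Hi. apply in_seq in Hi. apply (gterm_bound d i Hd). unfold T in *; lia. }
  rewrite Rabs_right in GS by lra.
  assert (ES : sumR (fun i => gterm d i * d^2) (seq 1 T) = d^2 * sumR (gterm d) (seq 1 T)).
  { rewrite <- sumR_scal. apply sumR_ext. intros; ring. }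
  rewrite ES in GS, GP.
  assert (HT : INR T * d <= 1).
  { assert (INR T * d <= INR T * delta_eta d) by (apply Rmult_le_compat_l; [apply pos_INR|lra]).
    pose proof PI_le4. lra. }
  replace ((gterm d 0 + 2 * sumR (gterm d) (seq 1 T)) * d^3) with
    (d * (gterm d 0 * d^2) + 2 * (d * (d^2 * sumR (gterm d) (seq 1 T)))) by (simpl; ring).
  assert (d * (d^2 * sumR (gterm d) (seq 1 T)) <= 180) .
  { assert (d * (d^2 * sumR (gterm d) (seq 1 T)) <= d * (INR T * 180)) by (apply Rmult_le_compat_l; lra).
    nra. }
  split.
  - assert (0 <= d * (gterm d 0 * d^2)) by (apply Rmult_le_pos; lra).
    assert (0 <= d * (d^2 * sumR (gterm d) (seq 1 T))) by (apply Rmult_le_pos; lra). lra.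
  - assert (d * (gterm d 0 * d^2) <= 2 * 180) by nra. lra.
Qed.

Lemma fq0 x : fq 0 x = sin x * cos x.
Proof. unfold fq. simpl. ring. Qed.

Lemma base_rate : exists K, forall y, 0 < y <= 2 ->
  Rabs (INR (M4 y) * y^3 - kappa2 / 2) <= K * sqrt y.
Proof.
  destruct base_term as [K1 HK1]. destruct riemann_half as [K2 HK2].
  exists (3 * Rabs K1 + 75 * Rabs K2 + 76000).
  intros y Hy.
  pose proof (Rabs_pos K1). pose proof (Rabs_pos K2). pose proof (RRle_abs K1). pose proof (RRle_abs K2).
  assert (Hk : 0 <= kappa2 <= 75).
  { pose proof PI_gt3. pose proof PI_le4. destruct r3_facts as [Er3 Br3].
    unfold kappa2. split. apply Rmult_le_pos. simpl; nra. apply Rlt_le, Rinv_0_lt_compat; lra.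
    apply (Rmult_le_reg_r (sqrt 3)). lra. replace (8 * PI ^ 2 / sqrt 3 * sqrt 3) with (8 * PI^2) by (field; lra).
    simpl. nra. }
  assert (Sy : 0 < sqrt y) by (apply sqrt_lt_R0; lra).
  destruct (Rle_or_lt y (1/10000)) as [Ys|Yl].
  - destruct (sqrt_small y ltac:(lra)) as [Esd [[Sd0 Sd1] Sd2]].
    pose proof (HK2 y Hy) as R2. cbv zeta in R2.
    destruct (T_bounds y Hy) as [T1 T2]. cbv zeta in T1.
    destruct (h_bounds y Hy) as [[Hh1 Hh2] _].
    set (h := delta_eta y) in *. set (T := (t_par y / 2)%nat) in *.
    rewrite M4_expand. fold h T.
    set (Sf := sumR (fun i => fq 0 (PI/4 + INR i * h)) (seq 1 T)) in *.
    assert (E0 : Rabs (gterm y 0 * y^2 - kappa2 * fq 0 (PI/4)) <= K1 * sqrt y).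
    { unfold gterm. fold h. replace (PI/4 + INR 0 * h) with (PI/4) by (simpl; ring).
      rewrite fq0. apply HK1. lra. pose proof PI_gt3. lra. }
    assert (ES : Rabs (sumR (fun i => gterm y i * y^2) (seq 1 T) - sumR (fun i => kappa2 * fq 0 (PI/4 + INR i * h)) (seq 1 T))
                 <= INR (length (seq 1 T)) * (K1 * sqrt y)).
    { apply sumR_err. intros i Hi. apply in_seq in Hi. unfold gterm. fold h. rewrite fq0. apply HK1. lra.
      apply (eta_range y i Hy). unfold T in Hi; lia. }
    rewrite length_seq in ES. rewrite sumR_scal in ES. fold Sf in ES.
    assert (ES2 : sumR (fun i => gterm y i * y^2) (seq 1 T) = y^2 * sumR (gterm y) (seq 1 T)).
    { rewrite <- sumR_scal. apply sumR_ext. intros; ring. }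
    rewrite ES2 in ES.
    assert (HT : INR T * y <= 1).
    { assert (INR T * y <= INR T * h) by (apply Rmult_le_compat_l; [apply pos_INR|lra]).
      pose proof PI_le4. lra. }
    set (G := sumR (gterm y) (seq 1 T)) in *.
    replace ((gterm y 0 + 2 * G) * y^3 - kappa2 / 2) with
      (y * (gterm y 0 * y^2 - kappa2 * fq 0 (PI/4)) + 2 * y * (y^2 * G - kappa2 * Sf)
       + kappa2 * (y * (fq 0 (PI/4) + 2 * Sf) - 1/2)) by (simpl; field).
    eapply Rle_trans. apply Rabs_triang. eapply Rle_trans. apply Rplus_le_compat_r. apply Rabs_triang.
    rewrite !Rabs_mult. rewrite (Rabs_right y), (Rabs_right 2), (Rabs_right kappa2) by lra.
    assert (A1 : y * Rabs (gterm y 0 * y ^ 2 - kappa2 * fq 0 (PI / 4)) <= 1 * (K1 * sqrt y)).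
    { apply Rmult_le_compat. lra. apply Rabs_pos. lra. exact E0. }
    assert (A2 : 2 * y * Rabs (y ^ 2 * G - kappa2 * Sf) <= 2 * (y * INR T) * (K1 * sqrt y)).
    { rewrite Rmult_assoc, (Rmult_assoc 2 (y * INR T)). apply Rmult_le_compat_l. lra.
      rewrite Rmult_assoc. apply Rmult_le_compat_l. lra. exact ES. }
    assert (A3 : kappa2 * Rabs (y * (fq 0 (PI / 4) + 2 * Sf) - 1 / 2) <= 75 * (K2 * y)).
    { apply Rmult_le_compat. lra. apply Rabs_pos. lra. exact R2. }
    assert (K1 * sqrt y <= Rabs K1 * sqrt y) by (apply Rmult_le_compat_r; lra).
    assert (0 <= Rabs K1 * sqrt y) by (apply Rmult_le_pos; lra).
    assert (2 * (y * INR T) * (K1 * sqrt y) <= 2 * (Rabs K1 * sqrt y)).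
    { assert (K1 * sqrt y <= Rabs K1 * sqrt y) by lra.
      assert (0 <= K1 * sqrt y) by (pose proof (Rabs_pos (y * (fq 0 (PI / 4) + 2 * Sf) - 1 / 2)); 
                                      pose proof (Rabs_pos (gterm y 0 * y ^ 2 - kappa2 * fq 0 (PI / 4))); lra).
      assert (y * INR T <= 1) by lra.
      assert (0 <= y * INR T) by (apply Rmult_le_pos; [lra | apply pos_INR]). nra. }
    assert (K2 * y <= Rabs K2 * sqrt y).
    { apply Rmult_le_compat; try lra. pose proof (Rabs_pos (y * (fq 0 (PI / 4) + 2 * Sf) - 1 / 2)). nra. }
    nra.
  - pose proof (M4_crude y Hy) as C.
    assert (Sy2 : 1/100 <= sqrt y).
    { destruct (Rle_or_lt (1/100) (sqrt y)); auto. assert (sqrt y * sqrt y = y) by (apply sqrt_sqrt; lra). nra. }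
    assert (Rabs (INR (M4 y) * y ^ 3 - kappa2 / 2) <= 760) by (apply Rabs_le; split; lra).
    assert (0 <= (3 * Rabs K1 + 75 * Rabs K2) * sqrt y) by (apply Rmult_le_pos; lra).
    nra.
Qed.


Lemma Mr_S j d : 0 < d <= 2 ->
  Mr (S j) (Finite d) =
  nsum (map (fun l => Mr j (divR d (cos (PI / 4 + (INR l - INR (t_par d / 2)) * delta_eta d))) *
                      Mr j (divR d (sin (PI / 4 + (INR l - INR (t_par d / 2)) * delta_eta d))))%nat
            (seq 0 (2 * (t_par d / 2) + 1))).
Proof.
  intros Hd. simpl Mr at 1. destruct Rlt_dec; [|lra]. destruct Rle_dec; [|lra]. reflexivity.
Qed.

Lemma Mr_0 d : 0 < d <= 2 -> Mr 0 (Finite d) = M4 d.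
Proof. intros Hd. simpl. destruct Rlt_dec; [|lra]. destruct Rle_dec; [|lra]. reflexivity. Qed.

Lemma Mr_big j y : 2 < y -> Mr j (Finite y) = 1%nat.
Proof. intros H. destruct j; simpl; destruct Rlt_dec; auto; destruct Rle_dec; auto; lra. Qed.

Lemma Mr_inf j : Mr j p_infty = 1%nat.
Proof. destruct j; reflexivity. Qed.

Lemma pow_le1 r n : 0 <= r <= 1 -> 0 <= r^n <= 1.
Proof.
  intros Hr. split. apply pow_le; lra.
  pose proof (pow_abs_le1 r n ltac:(rewrite Rabs_right; lra)). rewrite Rabs_right in H. lra.
  apply Rle_ge, pow_le; lra.
Qed.

Lemma pow_le_base r p : 0 <= r <= 1 -> (1 <= p)%nat -> r^p <= r.
Proof.
  intros Hr Hp. destruct p. lia. simpl. pose proof (pow_le1 r p Hr). nra.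
Qed.

Lemma pow_sqrt_frac r d p : 0 < r <= 1 -> 0 < d -> (1 <= p)%nat -> r^p * sqrt (d / r) <= sqrt d.
Proof.
  intros Hr Hd Hp.
  rewrite sqrt_div_alt by lra.
  assert (Sr : 0 < sqrt r) by (apply sqrt_lt_R0; lra).
  assert (Er : sqrt r * sqrt r = r) by (apply sqrt_sqrt; lra).
  assert (r <= sqrt r) by nra.
  pose proof (pow_le_base r p ltac:(lra) Hp).
  assert (0 <= sqrt d) by apply sqrt_pos.
  replace (r ^ p * (sqrt d / sqrt r)) with (sqrt d * (r^p / sqrt r)) by (field; lra).
  rewrite <- (Rmult_1_r (sqrt d)) at 2. apply Rmult_le_compat_l. lra.
  apply (Rmult_le_reg_r (sqrt r)). lra. replace (r ^ p / sqrt r * sqrt r) with (r^p) by (field; lra). lra.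
Qed.

Lemma d_le_2sqrt d : 0 < d <= 2 -> d <= 2 * sqrt d.
Proof.
  intros Hd. assert (E : sqrt d * sqrt d = d) by (apply sqrt_sqrt; lra).
  assert (0 < sqrt d) by (apply sqrt_lt_R0; lra). nra.
Qed.

Lemma dpow_bound d p : 0 < d <= 2 -> (1 <= p)%nat -> d^(p+1) <= 2^p * (d * sqrt d).
Proof.
  intros Hd Hp. destruct p. lia.
  replace (S p + 1)%nat with (S (S p)) by lia.
  assert (d^p <= 2^p) by (apply pow_incr; lra).
  pose proof (d_le_2sqrt d Hd). assert (0 <= d^p) by (apply pow_le; lra).
  simpl. assert (0 < sqrt d) by (apply sqrt_lt_R0; lra). 
  assert (d * d^p <= 2 * sqrt d * 2^p) by (apply Rmult_le_compat; lra).
  assert (d * (d * d^p) <= d * (2 * sqrt d * 2^p)) by (apply Rmult_le_compat_l; lra).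
  nra.
Qed.

Section Step.
Variable j p : nat.
Variable A K : R.
Hypothesis Hp : (1 <= p)%nat.
Hypothesis HR : forall y, 0 < y <= 2 -> Rabs (INR (Mr j (Finite y)) * y^p - A) <= K * sqrt y.

Lemma K_nonneg : 0 <= K.
Proof.
  pose proof (HR 1 ltac:(lra)). rewrite sqrt_1 in H. pose proof (Rabs_pos (INR (Mr j 1) * 1 ^ p - A)). lra.
Qed.

Definition U := Rabs A + 2 * K.

Lemma Mr_upper_fin y : 0 < y <= 2 -> INR (Mr j (Finite y)) * y^p <= U.
Proof.
  intros Hy. pose proof (HR y Hy). apply Rabs_le_between in H.
  assert (sqrt y <= 2).
  { assert (sqrt y * sqrt y = y) by (apply sqrt_sqrt; lra). pose proof (sqrt_pos y). nra. }
  pose proof K_nonneg. pose proof (RRle_abs A). unfold U.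
  assert (K * sqrt y <= K * 2) by (apply Rmult_le_compat_l; lra). lra.
Qed.

Lemma divR_pos d r : 0 < r -> divR d r = Finite (d / r).
Proof. intros. unfold divR. destruct Req_EM_T; [lra|reflexivity]. Qed.

Lemma Mr_upper d r : 0 < d <= 2 -> 0 <= r <= 1 -> INR (Mr j (divR d r)) * d^p <= U + 2^p.
Proof.
  intros Hd Hr. 
  assert (U0 : 0 <= U) by (unfold U; pose proof K_nonneg; pose proof (Rabs_pos A); lra).
  assert (Hdp : d^p <= 2^p) by (apply pow_incr; lra).
  assert (P2 : 0 < 2^p) by (apply pow_lt; lra).
  destruct (Req_dec r 0) as [E|E].
  - subst r. unfold divR. destruct Req_EM_T; [|lra]. rewrite Mr_inf. simpl INR. lra.
  - rewrite divR_pos by lra.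
    assert (Hy : d <= d / r).
    { apply (Rmult_le_reg_r r). lra. replace (d / r * r) with d by (field; lra). nra. }
    destruct (Rle_or_lt (d / r) 2) as [Y|Y].
    + pose proof (Mr_upper_fin (d/r) ltac:(split; lra)).
      assert (d^p <= (d/r)^p) by (apply pow_incr; lra).
      pose proof (pos_INR (Mr j (d / r))).
      assert (INR (Mr j (d / r)) * d ^ p <= INR (Mr j (d / r)) * (d/r) ^ p) by (apply Rmult_le_compat_l; lra).
      lra.
    + rewrite Mr_big by lra. simpl INR. lra.
Qed.

Definition Cst := (U + 2^p + A^2) * 2^p + 2 * Rabs A * K + 2 * K^2.

Lemma term_bad d r1 r2 : 0 < d <= 2 -> 0 <= r1 <= 1 -> 0 <= r2 <= 1 -> (r1 = 0 \/ 2 < d / r1) ->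
  Rabs (d^(2*p+1) * (INR (Mr j (divR d r1)) * INR (Mr j (divR d r2))) - d * A^2 * (r1 * r2)^p)
  <= (U + 2^p + A^2) * 2^p * (d * sqrt d).
Proof.
  intros Hd H1 H2 Hb.
  assert (E1 : Mr j (divR d r1) = 1%nat).
  { destruct Hb as [E|E].
    - subst r1. unfold divR. destruct Req_EM_T; [|lra]. apply Mr_inf.
    - assert (r1 <> 0) by (intro; subst; unfold Rdiv in E; rewrite Rinv_0, Rmult_0_r in E; lra).
      unfold divR. destruct Req_EM_T; [contradiction|]. apply Mr_big. lra. }
  assert (Hr1 : r1 <= d / 2).
  { destruct Hb as [E|E]. lra.
    assert (r1 <> 0) by (intro; subst; unfold Rdiv in E; rewrite Rinv_0, Rmult_0_r in E; lra).
    assert (0 < r1) by lra. apply (Rmult_lt_compat_r r1) in E; [|lra].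
    replace (d / r1 * r1) with d in E by (field; lra). lra. }
  rewrite E1. change (INR 1) with 1. rewrite Rmult_1_l.
  pose proof (Mr_upper d r2 Hd H2) as MU.
  set (M2 := INR (Mr j (divR d r2))) in *.
  assert (PM : 0 <= M2) by apply pos_INR.
  assert (U0 : 0 <= U) by (unfold U; pose proof K_nonneg; pose proof (Rabs_pos A); lra).
  assert (Edp : d^(2*p+1) * M2 = d^(p+1) * (M2 * d^p)).
  { replace (2*p+1)%nat with ((p+1) + p)%nat by lia. rewrite pow_add. ring. }
  rewrite Edp.
  assert (Dp : 0 <= d^(p+1)) by (apply pow_le; lra).
  assert (T1 : 0 <= d^(p+1) * (M2 * d^p) <= d^(p+1) * (U + 2^p)).
  { split. apply Rmult_le_pos. lra. apply Rmult_le_pos. lra. apply pow_le; lra.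
    apply Rmult_le_compat_l; lra. }
  assert (T2 : 0 <= d * A^2 * (r1 * r2)^p <= A^2 * d^(p+1)).
  { rewrite Rpow_mult_distr.
    assert (0 <= r1^p <= d^p) by (split; [apply pow_le; lra | apply pow_incr; lra]).
    pose proof (pow_le1 r2 p H2).
    assert (0 <= A^2) by apply pow2_ge_0.
    assert (0 <= r1^p * r2^p <= d^p) by (split; [apply Rmult_le_pos; lra | nra]).
    replace (A^2 * d^(p+1)) with (d * A^2 * d^p) by (rewrite pow_add; simpl; ring).
    split. apply Rmult_le_pos; [apply Rmult_le_pos|]; lra.
    apply Rmult_le_compat_l. apply Rmult_le_pos; lra. lra. }
  pose proof (dpow_bound d p Hd Hp) as DB.
  assert (0 <= A^2) by apply pow2_ge_0.
  assert (d^(p+1) * (U + 2^p + A^2) <= 2 ^ p * (d * sqrt d) * (U + 2^p + A^2)).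
  { apply Rmult_le_compat_r. pose proof (pow_le 2 p ltac:(lra)). lra. exact DB. }
  apply Rabs_le. split; nra.
Qed.

Lemma term_good d r1 r2 : 0 < d <= 2 -> 0 < r1 <= 1 -> 0 < r2 <= 1 -> d / r1 <= 2 -> d / r2 <= 2 ->
  Rabs (d^(2*p+1) * (INR (Mr j (divR d r1)) * INR (Mr j (divR d r2))) - d * A^2 * (r1 * r2)^p)
  <= (2 * Rabs A * K + 2 * K^2) * (d * sqrt d).
Proof.
  intros Hd H1 H2 G1 G2.
  rewrite !divR_pos by lra.
  assert (Y1 : 0 < d / r1) by (apply Rdiv_lt_0_compat; lra).
  assert (Y2 : 0 < d / r2) by (apply Rdiv_lt_0_compat; lra).
  pose proof (HR (d/r1) ltac:(split; lra)) as R1.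
  pose proof (HR (d/r2) ltac:(split; lra)) as R2.
  set (M1 := INR (Mr j (d/r1))) in *. set (M2 := INR (Mr j (d/r2))) in *.
  set (E1 := M1 * (d/r1)^p - A) in *. set (E2 := M2 * (d/r2)^p - A) in *.
  assert (Eq : d^(2*p+1) * (M1 * M2) - d * A^2 * (r1 * r2)^p
              = d * (r1^p * r2^p) * (A * E2 + A * E1 + E1 * E2)).
  { unfold E1, E2. replace (2*p+1)%nat with (S (p + p)) by lia.
    rewrite Rpow_mult_distr. unfold Rdiv. rewrite !Rpow_mult_distr, !pow_inv.
    rewrite <- tech_pow_Rmult, pow_add. field. split; apply pow_nonzero; lra. }
  rewrite Eq.
  pose proof K_nonneg as K0.
  pose proof (pow_sqrt_frac r1 d p H1 ltac:(lra) Hp) as S1.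
  pose proof (pow_sqrt_frac r2 d p H2 ltac:(lra) Hp) as S2.
  pose proof (pow_le1 r1 p ltac:(lra)) as P1. pose proof (pow_le1 r2 p ltac:(lra)) as P2.
  assert (B1 : r1^p * Rabs E1 <= K * sqrt d).
  { eapply Rle_trans. apply Rmult_le_compat_l. lra. exact R1.
    replace (r1 ^ p * (K * sqrt (d / r1))) with (K * (r1^p * sqrt (d/r1))) by ring.
    apply Rmult_le_compat_l; lra. }
  assert (B2 : r2^p * Rabs E2 <= K * sqrt d).
  { eapply Rle_trans. apply Rmult_le_compat_l. lra. exact R2.
    replace (r2 ^ p * (K * sqrt (d / r2))) with (K * (r2^p * sqrt (d/r2))) by ring.
    apply Rmult_le_compat_l; lra. }
  assert (Sd : sqrt d * sqrt d = d) by (apply sqrt_sqrt; lra).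
  assert (Sd0 : 0 < sqrt d) by (apply sqrt_lt_R0; lra).
  pose proof (d_le_2sqrt d Hd) as D2.
  pose proof (Rabs_pos E1). pose proof (Rabs_pos E2). pose proof (Rabs_pos A).
  rewrite Rabs_mult, (Rabs_right (d * (r1^p * r2^p))) by (apply Rle_ge, Rmult_le_pos; [lra|apply Rmult_le_pos; lra]).
  assert (X : r1^p * r2^p * Rabs (A * E2 + A * E1 + E1 * E2) <= 2 * Rabs A * K * sqrt d + K^2 * d).
  { eapply Rle_trans. apply Rmult_le_compat_l. apply Rmult_le_pos; lra.
    eapply Rle_trans. apply Rabs_triang. apply Rplus_le_compat_r. apply Rabs_triang.
    rewrite !Rabs_mult.
    assert (r1^p * r2^p * (Rabs A * Rabs E2) <= Rabs A * (K * sqrt d)).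
    { replace (r1^p * r2^p * (Rabs A * Rabs E2)) with (Rabs A * r1^p * (r2^p * Rabs E2)) by ring.
      rewrite Rmult_assoc. apply Rmult_le_compat_l. lra.
      rewrite <- (Rmult_1_l (K * sqrt d)). apply Rmult_le_compat; try lra. apply Rmult_le_pos; lra. }
    assert (r1^p * r2^p * (Rabs A * Rabs E1) <= Rabs A * (K * sqrt d)).
    { replace (r1^p * r2^p * (Rabs A * Rabs E1)) with (Rabs A * r2^p * (r1^p * Rabs E1)) by ring.
      rewrite Rmult_assoc. apply Rmult_le_compat_l. lra.
      rewrite <- (Rmult_1_l (K * sqrt d)). apply Rmult_le_compat; try lra. apply Rmult_le_pos; lra. }
    assert (HX5 : r1^p * r2^p * (Rabs E1 * Rabs E2) <= (K * sqrt d) * (K * sqrt d)).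
    { replace (r1^p * r2^p * (Rabs E1 * Rabs E2)) with ((r1^p * Rabs E1) * (r2^p * Rabs E2)) by ring.
      apply Rmult_le_compat; try lra; apply Rmult_le_pos; lra. }
    assert (EE : (K * sqrt d) * (K * sqrt d) = K^2 * d) by (replace (K^2*d) with (K*K*(sqrt d*sqrt d)) by (rewrite Sd; simpl; ring); ring).
    rewrite EE in HX5.
    lra. }
  assert (K^2 * d <= K^2 * (2 * sqrt d)) by (apply Rmult_le_compat_l; [apply pow2_ge_0|lra]).
  replace (d * (r1 ^ p * r2 ^ p) * Rabs (A * E2 + A * E1 + E1 * E2)) with (d * (r1 ^ p * r2 ^ p * Rabs (A * E2 + A * E1 + E1 * E2))) by ring.
  replace ((2 * Rabs A * K + 2 * K ^ 2) * (d * sqrt d)) with (d * (2 * Rabs A * K * sqrt d + K^2 * (2 * sqrt d))) by ring.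
  apply Rmult_le_compat_l; lra.
Qed.

Lemma term_all d r1 r2 : 0 < d <= 2 -> 0 <= r1 <= 1 -> 0 <= r2 <= 1 ->
  Rabs (d^(2*p+1) * (INR (Mr j (divR d r1)) * INR (Mr j (divR d r2))) - d * A^2 * (r1 * r2)^p)
  <= Cst * (d * sqrt d).
Proof.
  intros Hd H1 H2.
  assert (Q1 : 0 <= (U + 2^p + A^2) * 2^p * (d * sqrt d)).
  { assert (U0 : 0 <= U) by (unfold U; pose proof K_nonneg; pose proof (Rabs_pos A); lra).
    pose proof (pow_le 2 p ltac:(lra)). pose proof (pow2_ge_0 A). pose proof (sqrt_pos d).
    apply Rmult_le_pos. apply Rmult_le_pos; lra. apply Rmult_le_pos; lra. }
  assert (Q2 : 0 <= (2 * Rabs A * K + 2 * K^2) * (d * sqrt d)).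
  { pose proof K_nonneg. pose proof (Rabs_pos A). pose proof (pow2_ge_0 K). pose proof (sqrt_pos d).
    apply Rmult_le_pos. nra. apply Rmult_le_pos; lra. }
  assert (L1 : (U + 2^p + A^2) * 2^p * (d * sqrt d) <= Cst * (d * sqrt d)).
  { unfold Cst. rewrite Rmult_plus_distr_r. lra. }
  assert (L2 : (2 * Rabs A * K + 2 * K^2) * (d * sqrt d) <= Cst * (d * sqrt d)).
  { unfold Cst. replace (((U + 2 ^ p + A ^ 2) * 2 ^ p + 2 * Rabs A * K + 2 * K ^ 2) * (d * sqrt d))
      with ((U + 2 ^ p + A ^ 2) * 2 ^ p * (d * sqrt d) + (2 * Rabs A * K + 2 * K ^ 2) * (d * sqrt d)) by ring. lra. }
  assert (Sw : forall a b : R, a * b = b * a) by (intros; ring).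
  destruct (Rle_or_lt r1 0) as [B1|G1].
  { pose proof (term_bad d r1 r2 Hd H1 H2 ltac:(left; lra)). lra. }
  destruct (Rle_or_lt (d / r1) 2) as [G1'|B1'].
  2:{ pose proof (term_bad d r1 r2 Hd H1 H2 ltac:(right; lra)). lra. }
  destruct (Rle_or_lt r2 0) as [B2|G2].
  { pose proof (term_bad d r2 r1 Hd H2 H1 ltac:(left; lra)).
    rewrite (Sw (INR (Mr j (divR d r1)))), (Sw r1). lra. }
  destruct (Rle_or_lt (d / r2) 2) as [G2'|B2'].
  2:{ pose proof (term_bad d r2 r1 Hd H2 H1 ltac:(right; lra)).
      rewrite (Sw (INR (Mr j (divR d r1)))), (Sw r1). lra. }
  pose proof (term_good d r1 r2 Hd ltac:(lra) ltac:(lra) G1' G2'). lra.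
Qed.
End Step.

Lemma eta_l_range d l : 0 < d <= 2 -> (l <= 2 * (t_par d / 2))%nat ->
  let e := PI / 4 + (INR l - INR (t_par d / 2)) * delta_eta d in
  0 <= cos e <= 1 /\ 0 <= sin e <= 1.
Proof.
  intros Hd Hl e. destruct (T_bounds d Hd) as [T1 T2]. cbv zeta in T1.
  destruct (h_bounds d Hd) as [[H1 H2] _].
  apply le_INR in Hl. rewrite mult_INR in Hl. change (INR 2) with 2 in Hl.
  pose proof (pos_INR l). pose proof PI_gt3.
  set (T := (t_par d / 2)%nat) in *. set (h := delta_eta d) in *.
  assert (X1 : - (INR T * h) <= (INR l - INR T) * h) by nra.
  assert (X2 : (INR l - INR T) * h <= INR T * h) by nra.
  pose proof (SIN_bound e). pose proof (COS_bound e).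
  split; split; try lra.
  - apply cos_ge_0; unfold e; lra.
  - apply sin_ge_0; unfold e; lra.
Qed.

Lemma rate_step j p q A K : p = (2*q+1)%nat ->
  (forall y, 0 < y <= 2 -> Rabs (INR (Mr j (Finite y)) * y^p - A) <= K * sqrt y) ->
  exists K', forall d, 0 < d <= 2 -> Rabs (INR (Mr (S j) (Finite d)) * d^(2*p+1) - A^2 * Iq q) <= K' * sqrt d.
Proof.
  intros Ep HR.
  assert (Hp : (1 <= p)%nat) by lia.
  destruct (riemann_full q) as [KR HKR].
  set (C := Cst p A K).
  exists (4 * Rabs C + 2 * A^2 * Rabs KR).
  intros d Hd.
  pose proof (HKR d Hd) as RF. cbv zeta in RF.
  destruct (T_bounds d Hd) as [T1 T2]. cbv zeta in T1.
  destruct (h_bounds d Hd) as [[H1 H2] _].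
  rewrite Mr_S by exact Hd. rewrite INR_nsum_map.
  set (T := (t_par d / 2)%nat) in *. set (h := delta_eta d) in *.
  pose (et := fun l => PI / 4 + (INR l - INR T) * h).
  set (X := sumR (fun l => d^(2*p+1) * (INR (Mr j (divR d (cos (et l)))) * INR (Mr j (divR d (sin (et l)))))) (seq 0 (2*T+1))).
  set (Y := sumR (fun l => d * A^2 * (cos (et l) * sin (et l))^p) (seq 0 (2*T+1))).
  assert (EX : sumR (fun i => INR (Mr j (divR d (cos (PI / 4 + (INR i - INR T) * h))) * Mr j (divR d (sin (PI / 4 + (INR i - INR T) * h))))) (seq 0 (2*T+1)) * d^(2*p+1) = X).
  { unfold X. rewrite Rmult_comm, <- sumR_scal. apply sumR_ext. intros. rewrite mult_INR. reflexivity. }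
  rewrite EX.
  set (Sf := sumR (fun l => fq q (PI / 4 + (INR l - INR T) * h)) (seq 0 (2 * T + 1))) in *.
  assert (EY : Y = d * A^2 * Sf).
  { unfold Y, Sf. rewrite <- sumR_scal. apply sumR_ext. intros. unfold fq, et. rewrite <- Ep.
    rewrite (Rmult_comm (cos _)). reflexivity. }
  assert (HXY : Rabs (X - Y) <= INR (length (seq 0 (2*T+1))) * (C * (d * sqrt d))).
  { apply sumR_err. intros l Hl. apply in_seq in Hl.
    destruct (eta_l_range d l Hd ltac:(unfold T in Hl; lia)) as [Hc Hs].
    apply (term_all j p A K Hp HR d _ _ Hd Hc Hs). }
  rewrite length_seq in HXY.
  assert (EN : INR (2*T+1) = 2 * INR T + 1) by (rewrite plus_INR, mult_INR; simpl; ring).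
  rewrite EN in HXY.
  assert (Sd0 : 0 < sqrt d) by (apply sqrt_lt_R0; lra).
  pose proof (d_le_2sqrt d Hd) as D2.
  assert (HTd : (2 * INR T + 1) * d <= 4).
  { assert (INR T * d <= INR T * h) by (apply Rmult_le_compat_l; [apply pos_INR|lra]).
    pose proof PI_le4. nra. }
  assert (HC : C * (d * sqrt d) <= Rabs C * (d * sqrt d)) by (apply Rmult_le_compat_r; [nra | apply RRle_abs]).
  assert (HXY2 : Rabs (X - Y) <= 4 * Rabs C * sqrt d).
  { eapply Rle_trans. exact HXY.
    replace ((2 * INR T + 1) * (C * (d * sqrt d))) with (((2 * INR T + 1) * d) * (C * sqrt d)) by ring.
    pose proof (Rabs_pos (X - Y)). 
    assert (0 <= C * sqrt d).
    { assert (0 <= (2 * INR T + 1) * (C * (d * sqrt d))) by lra.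
      assert (0 < (2 * INR T + 1) * d) by (pose proof (pos_INR T); nra). 
      replace ((2 * INR T + 1) * (C * (d * sqrt d))) with (((2 * INR T + 1) * d) * (C * sqrt d)) in H0 by ring.
      nra. }
    assert (((2 * INR T + 1) * d) * (C * sqrt d) <= 4 * (C * sqrt d)) by (apply Rmult_le_compat_r; lra).
    assert (C * sqrt d <= Rabs C * sqrt d) by (apply Rmult_le_compat_r; [lra | apply RRle_abs]).
    lra. }
  assert (HY : Rabs (Y - A^2 * Iq q) <= 2 * A^2 * Rabs KR * sqrt d).
  { rewrite EY. replace (d * A ^ 2 * Sf - A ^ 2 * Iq q) with (A^2 * (d * Sf - Iq q)) by ring.
    rewrite Rabs_mult, (Rabs_right (A^2)) by (apply Rle_ge, pow2_ge_0).
    pose proof (pow2_ge_0 A).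
    assert (KR * d <= Rabs KR * (2 * sqrt d)) by (apply Rmult_le_compat; try lra; [pose proof (Rabs_pos (d * Sf - Iq q)); nra | apply RRle_abs]).
    assert (A^2 * Rabs (d * Sf - Iq q) <= A^2 * (Rabs KR * (2 * sqrt d))) by (apply Rmult_le_compat_l; lra).
    lra. }
  replace (X - A^2 * Iq q) with ((X - Y) + (Y - A^2 * Iq q)) by ring.
  eapply Rle_trans. apply Rabs_triang. lra.
Qed.


Lemma sphere_id h : (1 <= h)%nat ->
  sphere_area_even (2*h) ^ 2 * V (h - 1) = sphere_area_even (4*h) * 2^(2*h).
Proof.
  intros Hh. destruct h as [|r]. lia. replace (S r - 1)%nat with r by lia.
  unfold sphere_area_even.
  assert (E1 : (2 * S r / 2 = S r)%nat) by (rewrite Nat.mul_comm; apply Nat.div_mul; lia).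
  assert (E2 : (4 * S r / 2 = 2 * S r)%nat) by (replace (4 * S r)%nat with (2 * S r * 2)%nat by lia; apply Nat.div_mul; lia).
  rewrite E1, E2, V_closed.
  assert (F1 : INR (fact r) <> 0) by (apply not_0_INR, fact_neq_0).
  assert (F2 : INR (fact (2*r+1)) <> 0) by (apply not_0_INR, fact_neq_0).
  assert (G1 : INR (fact (S r)) = (INR r + 1) * INR (fact r)) by (rewrite INR_fact_S, S_INR; ring).
  assert (G2 : INR (fact (2 * S r)) = (2 * INR r + 2) * INR (fact (2*r+1))).
  { replace (2 * S r)%nat with (S (2*r+1)) by lia. rewrite INR_fact_S, S_INR, plus_INR, mult_INR. simpl. ring. }
  assert (G3 : PI ^ (2 * S r) = (PI ^ S r)^2) by (rewrite <- pow_mult; f_equal; lia).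
  assert (G4 : 2 ^ (2 * S r) = 4 * 4 ^ r).
  { rewrite pow_mult. replace (2^2) with 4 by (simpl; lra). reflexivity. }
  assert (G5 : INR (2 * S r) = 2 * INR r + 2) by (rewrite mult_INR, (S_INR r); change (INR 2) with 2; ring).
  assert (G6 : INR (4 * S r) = 4 * INR r + 4) by (rewrite mult_INR, (S_INR r); replace (INR 4) with 4 by (simpl; lra); ring).
  rewrite G1, G2, G3, G4, G5, G6.
  pose proof (pos_INR r).
  field. repeat split; try assumption; lra.
Qed.

Lemma lim_from_rate (g : R -> R) (L K : R) :
  (forall d, 0 < d <= 2 -> Rabs (g d - L) <= K * sqrt d) -> filterlim g (at_right 0) (locally L).
Proof.
  intros H. apply filterlim_locally. intros eps.
  set (K1 := Rabs K + 1).
  assert (HK1 : 0 < K1) by (unfold K1; pose proof (Rabs_pos K); lra).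
  set (t := eps / K1).
  assert (Ht : 0 < t) by (unfold t; apply Rdiv_lt_0_compat; [apply cond_pos | lra]).
  assert (Hd : 0 < Rmin 2 (t * t)) by (apply Rmin_pos; nra).
  exists (mkposreal _ Hd). intros y Hy Hpos. simpl in Hy.
  change (Rabs (y - 0) < Rmin 2 (t * t)) in Hy. rewrite Rminus_0_r, Rabs_right in Hy by lra.
  change (Rabs (g y - L) < eps).
  assert (Y2 : y <= 2) by (pose proof (Rmin_l 2 (t*t)); lra).
  assert (Yt : y < t * t) by (pose proof (Rmin_r 2 (t*t)); lra).
  pose proof (H y ltac:(split; lra)) as Hg.
  assert (Sy : sqrt y < t).
  { assert (sqrt y * sqrt y = y) by (apply sqrt_sqrt; lra). pose proof (sqrt_pos y). nra. }
  assert (K * sqrt y <= Rabs K * sqrt y) by (apply Rmult_le_compat_r; [apply sqrt_pos | apply RRle_abs]).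
  assert (Rabs K * sqrt y <= K1 * sqrt y) by (apply Rmult_le_compat_r; [apply sqrt_pos | unfold K1; lra]).
  assert (K1 * sqrt y < K1 * t) by (apply Rmult_lt_compat_l; lra).
  replace (K1 * t) with (pos eps) in H2 by (unfold t; field; lra).
  lra.
Qed.

Definition pj (j : nat) : nat := (2^(j+2) - 1)%nat.
Definition qj (j : nat) : nat := (2^(j+1) - 1)%nat.

Lemma pow2_ge1 n : (1 <= 2^n)%nat.
Proof. induction n; simpl; lia. Qed.

Lemma pj_qj j : pj j = (2 * qj j + 1)%nat.
Proof.
  unfold pj, qj. replace (j+2)%nat with (S (j+1)) by lia. rewrite Nat.pow_succ_r'.
  pose proof (pow2_ge1 (j+1)). lia.
Qed.

Lemma pj_S j : pj (S j) = (2 * pj j + 1)%nat.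
Proof.
  unfold pj. replace (S j + 2)%nat with (S (j+2)) by lia. rewrite Nat.pow_succ_r'.
  pose proof (pow2_ge1 (j+2)). lia.
Qed.

Fixpoint Aseq (j : nat) : R :=
  match j with
  | O => kappa2 / 2
  | S j' => Aseq j' ^ 2 * Iq (qj j')
  end.

Lemma rate_all j : exists K, forall y, 0 < y <= 2 ->
  Rabs (INR (Mr j (Finite y)) * y^(pj j) - Aseq j) <= K * sqrt y.
Proof.
  induction j as [|j IH].
  - destruct base_rate as [K HK]. exists K. intros y Hy. rewrite Mr_0 by exact Hy.
    apply HK. exact Hy.
  - destruct IH as [K HK].
    destruct (rate_step j (pj j) (qj j) (Aseq j) K (pj_qj j) HK) as [K' HK'].
    exists K'. intros d Hd. rewrite pj_S. apply HK'. exact Hd.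
Qed.

Definition Delta (j : nat) : R := Rpower 2 (1 - 3 * INR (2^j)) * Rpower 3 (- Rpower 2 (INR j - 1)).

Lemma Delta_S j : Delta (S j) = Delta j ^ 2 / 2.
Proof.
  unfold Delta.
  assert (E1 : 1 - 3 * INR (2 ^ S j) = (1 - 3 * INR (2^j)) + (1 - 3 * INR (2^j)) + (- 1)).
  { rewrite Nat.pow_succ_r', mult_INR. simpl INR. ring. }
  assert (E2 : INR (S j) - 1 = (INR j - 1) + 1) by (rewrite S_INR; ring).
  assert (R21 : Rpower 2 1 = 2).
  { change (Rpower 2 1) with (Rpower 2 (INR 1)). rewrite Rpower_pow by lra. simpl. ring. }
  rewrite E1, E2, !Rpower_plus, R21.
  replace (- (Rpower 2 (INR j - 1) * 2)) with (- Rpower 2 (INR j - 1) + - Rpower 2 (INR j - 1)) by ring.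
  rewrite Rpower_plus.
  replace (-1) with (- (1)) by ring. rewrite Rpower_Ropp, R21.
  field.
Qed.

Lemma Aseq_closed j : Aseq j = Delta j * sphere_area_even (2^(j+2)) * 2^(pj j).
Proof.
  induction j as [|j IH].
  - simpl Aseq. unfold Delta, kappa2, sphere_area_even. simpl (2^(0+2))%nat. simpl pj.
    replace (4/2)%nat with 2%nat by reflexivity.
    replace (INR (2^0)) with 1 by reflexivity.
    replace (1 - 3 * 1) with (- INR 2) by (simpl; ring).
    replace (INR 0 - 1) with (- 1) by (simpl; ring).
    assert (R21 : Rpower 2 1 = 2).
    { change (Rpower 2 1) with (Rpower 2 (INR 1)). rewrite Rpower_pow by lra. simpl. ring. }
    replace (-1) with (- (1)) by ring.
    rewrite !Rpower_Ropp, Rpower_pow, R21 by lra.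
    rewrite Rpower_sqrt by lra.
    unfold pj. simpl.
    assert (0 < sqrt 3) by (apply sqrt_lt_R0; lra). field. lra.
  - change (Aseq (S j)) with (Aseq j ^ 2 * Iq (qj j)). rewrite IH, Delta_S.
    set (h := (2^(j+1))%nat).
    assert (Eh1 : (2^(j+2) = 2 * h)%nat) by (unfold h; replace (j+2)%nat with (S (j+1)) by lia; apply Nat.pow_succ_r').
    assert (Eh2 : (2^(S j+2) = 4 * h)%nat) by (unfold h; replace (S j+2)%nat with (S (S (j+1))) by lia; rewrite !Nat.pow_succ_r'; lia).
    assert (Eq : qj j = (h - 1)%nat) by reflexivity.
    rewrite Eh1, Eh2, Eq.
    pose proof (sphere_id h ltac:(unfold h; apply pow2_ge1)) as SI.
    rewrite <- Eq in SI.
    assert (E4 : (2 * h)%nat = S (pj j)) by (unfold pj; rewrite Eh1; unfold h; pose proof (pow2_ge1 (j+1)); lia).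
    replace (2^(2*h)) with (2^(S (pj j))) in SI by (rewrite E4; reflexivity).
    unfold Iq. rewrite pj_S.
    assert (E3 : (2 * qj j + 2)%nat = S (pj j)) by (rewrite pj_qj; lia).
    rewrite <- Eq. rewrite E3.
    set (S2 := sphere_area_even (2*h)) in *. set (S4 := sphere_area_even (4*h)) in *.
    set (X := 2 ^ pj j).
    assert (EX1 : 2 ^ S (pj j) = 2 * X) by reflexivity.
    assert (EX2 : 2 ^ (2 * pj j + 1) = 2 * X^2).
    { unfold X. replace (2 * pj j + 1)%nat with (pj j * 2 + 1)%nat by lia. rewrite pow_add, pow_mult, pow_1. ring. }
    rewrite EX1 in SI |- *. rewrite EX2.
    assert (HX : 0 < X) by (unfold X; apply pow_lt; lra).
    replace ((Delta j * S2 * X) ^ 2 * (V (qj j) / (2 * X))) with (Delta j ^ 2 * X * (S2 ^ 2 * V (qj j)) / 2) by (field; lra).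
    rewrite SI. field.
Qed.

Lemma sphere_pos n : (1 <= n)%nat -> 0 < sphere_area_even n.
Proof.
  intros Hn. unfold sphere_area_even. apply Rmult_lt_0_compat. apply Rmult_lt_0_compat.
  apply lt_0_INR; lia. apply pow_lt; pose proof PI_gt3; lra.
  apply Rinv_0_lt_compat, lt_0_INR. pose proof (fact_neq_0 (n/2)); lia.
Qed.

Theorem corollary2 (k : nat) (hk : (2 <= k)%nat) :
  filterlim
    (fun d : R => INR (M_SCHF k d) / sphere_area_even (2 ^ k) * (d / 2) ^ (2 ^ k - 1))
    (at_right 0)
    (locally (Rpower 2 (1 - 3 * INR (2 ^ (k - 2))) * Rpower 3 (- Rpower 2 (INR k - 3)))).
Proof.
  set (j := (k - 2)%nat).
  assert (Ek : k = (j + 2)%nat) by (unfold j; lia).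
  assert (EL : Rpower 2 (1 - 3 * INR (2 ^ j)) * Rpower 3 (- Rpower 2 (INR k - 3)) = Delta j).
  { unfold Delta. replace (INR k - 3) with (INR j - 1) by (rewrite Ek, plus_INR; simpl; ring). reflexivity. }
  rewrite EL.
  assert (EM : forall d, M_SCHF k d = Mr j (Finite d)) by (intro; unfold M_SCHF; fold j; reflexivity).
  assert (Ep : (2 ^ k - 1)%nat = pj j) by (unfold pj; rewrite Ek; reflexivity).
  rewrite Ep. replace (2 ^ k)%nat with (2 ^ (j+2))%nat by (rewrite Ek; reflexivity).
  set (S := sphere_area_even (2 ^ (j+2))).
  assert (HS : 0 < S) by (apply sphere_pos, pow2_ge1).
  set (X := 2 ^ pj j).
  assert (HX : 0 < X) by (apply pow_lt; lra).
  assert (EDel : Delta j = Aseq j / (S * X)) by (rewrite Aseq_closed; fold S X; field; lra).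
  destruct (rate_all j) as [K HK].
  apply (lim_from_rate _ _ (K / (S * X))).
  intros d Hd. rewrite EM.
  assert (Ef : INR (Mr j d) / S * (d / 2) ^ pj j - Delta j = (INR (Mr j d) * d ^ pj j - Aseq j) / (S * X)).
  { rewrite EDel. unfold X. unfold Rdiv. rewrite Rpow_mult_distr, pow_inv. field. split; [apply pow_nonzero; lra | lra]. }
  rewrite Ef. unfold Rdiv. rewrite Rabs_mult, (Rabs_right (/ (S * X))) by (apply Rle_ge, Rlt_le, Rinv_0_lt_compat; nra).
  replace (K * / (S * X) * sqrt d) with (K * sqrt d * / (S * X)) by ring.
  apply Rmult_le_compat_r. apply Rlt_le, Rinv_0_lt_compat; nra.
  apply HK. exact Hd.
Qed.
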